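(* Let $X, Y \subseteq \omega$. There exists an embedding $\mathcal{K}_2^X \to \mathcal{B}^Y$ if and only if $X \le_T Y$.
   Context: A partial combinatory algebra (pca) is a set $A$ with a partial binary application $\cdot$ containing distinct elements $\mathrm{s},\mathrm{k}$ with $\mathrm{k}ab\downarrow = a$, $\mathrm{s}ab\downarrow$, and $\mathrm{s}abc \simeq (ac)(bc)$. Given pcas $\mathcal{A},\mathcal{B}$, an embedding $\mathcal{A}\hookrightarrow\mathcal{B}$ is an injection $f$ such that whenever $aa'\downarrow$ in $\mathcal{A}$, $f(a)f(a')\downarrow = f(aa')$. Kleene's second model $\mathcal{K}_2$ is taken with carrier $\omega^\omega$ and application $g\cdot h = \Phi^{g\oplus h}_{g(0)}$, where $\Phi_e$ is the $e$-th Turing functional and $g\cdot h$ is defined iff the function on the right is total. Van Oosten's sequential computation model $\mathcal{B}$ is the same definition but with carrier the set of partial functions $\omega\rightharpoonup\omega$ (application always defined). For $X\subseteq\omega$, $\mathcal{K}_2^X$ is the sub-pca of $X$-computable total functions and $\mathcal{B}^X$ the sub-pca of partial $X$-computable functions. *)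

(* Defs.v *)
From Stdlib Require Import Arith List.
Import ListNotations.

Inductive code : Type :=
| cZero : code
| cSucc : code
| cProj : nat -> code            (* i-th argument (0 if absent) *)
| cOrac : code
| cComp : code -> codes -> code
| cPrec : code -> code -> code   (* primitive recursion on first argument *)
| cMin  : code -> code
with codes : Type :=
| cnil : codes
| ccons : code -> codes -> codes.

(** Big-step semantics relative to a partial oracle [o : nat -> option nat].
    Querying the oracle at a point where it is undefined diverges
    (sequential computation). *)
Inductive ev (o : nat -> option nat) : code -> list nat -> nat -> Prop :=
| evZero a : ev o cZero a 0
| evSucc a : ev o cSucc a (S (hd 0 a))
| evProj i a : ev o (cProj i) a (nth i a 0)
| evOrac a y : o (hd 0 a) = Some y -> ev o cOrac a y
| evComp f gs a bs y : evs o gs a bs -> ev o f bs y -> ev o (cComp f gs) a y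
| evPrec0 f g a y : ev o f a y -> ev o (cPrec f g) (0 :: a) y
| evPrecS f g n a z y :
    ev o (cPrec f g) (n :: a) z -> ev o g (n :: z :: a) y ->
    ev o (cPrec f g) (S n :: a) y
| evMin f a n :
    ev o f (n :: a) 0 ->
    (forall m, m < n -> exists k, ev o f (m :: a) (S k)) ->
    ev o (cMin f) a n
with evs (o : nat -> option nat) : codes -> list nat -> list nat -> Prop :=
| evsNil a : evs o cnil a nil
| evsCons g gs a y ys : ev o g a y -> evs o gs a ys -> evs o (ccons g gs) a (y :: ys).

Definition cpair (a b : nat) : nat := (a + b) * (a + b + 1) / 2 + b.

Fixpoint enc (c : code) : nat :=
  match c with
  | cZero => cpair 0 0
  | cSucc => cpair 1 0
  | cProj i => cpair 2 i
  | cOrac => cpair 3 0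
  | cComp f gs => cpair 4 (cpair (enc f) (encs gs))
  | cPrec f g => cpair 5 (cpair (enc f) (enc g))
  | cMin f => cpair 6 (enc f)
  end
with encs (gs : codes) : nat :=
  match gs with
  | cnil => 0
  | ccons g gs' => S (cpair (enc g) (encs gs'))
  end.

(** [Phi o e n m] : the e-th Turing functional with oracle [o], on input [n],
    halts with output [m].  (Indices that code no program give the
    nowhere-defined functional.) *)
Definition Phi (o : nat -> option nat) (e n m : nat) : Prop :=
  exists c, enc c = e /\ ev o c [n] m.

Definition join (g h : nat -> option nat) (n : nat) : option nat :=
  if Nat.even n then g (Nat.div2 n) else h (Nat.div2 n).

Definition tot (g : nat -> nat) : nat -> option nat := fun n => Some (g n).

(** Subsets of omega are represented by their (boolean) characteristic
    functions. *)
Definition chi (X : nat -> bool) : nat -> nat := fun n => if X n then 1 else 0.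

Definition turing_le (X Y : nat -> bool) : Prop :=
  exists e, forall n, Phi (tot (chi Y)) e n (chi X n).

Definition appK2 (g h k : nat -> nat) : Prop :=
  forall n, Phi (join (tot g) (tot h)) (g 0) n (k n).

(** [appB f h k] : f . h = k  (if f(0) is undefined, f . h is the empty
    function). *)
Definition appB (f h k : nat -> option nat) : Prop :=
  forall n m, k n = Some m <->
    exists e, f 0 = Some e /\ Phi (join f h) e n m.

Definition comp_tot (X : nat -> bool) (g : nat -> nat) : Prop :=
  exists e, forall n, Phi (tot (chi X)) e n (g n).

Definition comp_part (Y : nat -> bool) (f : nat -> option nat) : Prop :=
  exists e, forall n m, f n = Some m <-> Phi (tot (chi Y)) e n m.

Definition K2X (X : nat -> bool) : Type := { g : nat -> nat | comp_tot X g }.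
Definition BY (Y : nat -> bool) : Type := { f : nat -> option nat | comp_part Y f }.

Definition embedding_K2X_BY (X Y : nat -> bool) (F : K2X X -> BY Y) : Prop :=
  (forall a b, F a = F b -> a = b) /\
  (forall a a' c : K2X X, appK2 (proj1_sig a) (proj1_sig a') (proj1_sig c) ->
     appB (proj1_sig (F a)) (proj1_sig (F a')) (proj1_sig (F c))).

(* Main.v *)
Require Import Defs.
From Stdlib Require Import Arith List Lia PeanoNat Setoid Morphisms FunctionalExtensionality ProofIrrelevance Classical.
Import ListNotations.

Scheme ev_mut := Induction for ev Sort Prop
with evs_mut := Induction for evs Sort Prop.
Scheme code_mut := Induction for code Sort Prop
with codes_mut := Induction for codes Sort Prop.

Lemma tri_succ s : (S s) * (S s + 1) / 2 = s * (s + 1) / 2 + S s.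
Proof.
  replace (S s * (S s + 1)) with (s * (s + 1) + S s * 2) by lia.
  rewrite Nat.div_add by lia. reflexivity.
Qed.

Lemma tri_mono s s' : s <= s' -> s * (s+1) / 2 <= s' * (s'+1)/2.
Proof. intros H. apply Nat.Div0.div_le_mono. apply Nat.mul_le_mono; lia. Qed.

Lemma cpair_lt a b s : a + b < s -> cpair a b < s * (s+1) / 2.
Proof.
  intros H. unfold cpair. destruct s as [|s]; [lia|].
  rewrite tri_succ. pose proof (tri_mono (a+b) s ltac:(lia)). lia.
Qed.

Lemma cpair_inj a b a' b' : cpair a b = cpair a' b' -> a = a' /\ b = b'.
Proof.
  intros H.
  assert (a + b = a' + b').
  { destruct (lt_eq_lt_dec (a+b) (a'+b')) as [[Hl|Hl]|Hl]; auto.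
    - pose proof (cpair_lt a b (a'+b') Hl). unfold cpair at 2 in H. lia.
    - pose proof (cpair_lt a' b' (a+b) Hl). unfold cpair at 1 in H. lia. }
  unfold cpair in H. rewrite H0 in H. lia.
Qed.

Ltac cpinj := repeat match goal with H : cpair _ _ = cpair _ _ |- _ => apply cpair_inj in H; destruct H end.

Lemma enc_inj_mut :
  (forall c c', enc c = enc c' -> c = c') /\ (forall gs gs', encs gs = encs gs' -> gs = gs').
Proof.
  assert (HH := code_mut (fun c => forall c', enc c = enc c' -> c = c')
                  (fun gs => forall gs', encs gs = encs gs' -> gs = gs')).
  assert (HH2 := codes_mut (fun c => forall c', enc c = enc c' -> c = c')
                  (fun gs => forall gs', encs gs = encs gs' -> gs = gs')).
  match type of HH with ?A -> ?B -> ?C -> ?D -> ?E -> ?F -> ?G -> ?H -> ?I -> _ =>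
    assert (A /\ B /\ C /\ D /\ E /\ F /\ G /\ H /\ I) as [h1 [h2 [h3 [h4 [h5 [h6 [h7 [h8 h9]]]]]]]] end.
  { repeat split.
    all: try (intros; destruct c'; simpl in *; cpinj; try lia; f_equal; auto; fail).
    - intros gs' H; destruct gs'; simpl in *; congruence.
    - intros c IH gs IHs gs' H; destruct gs'; simpl in *; [congruence|].
      injection H as H. cpinj. f_equal; auto. }
  split; [apply HH|apply HH2]; auto.
Qed.

Lemma enc_inj c c' : enc c = enc c' -> c = c'.
Proof. apply enc_inj_mut. Qed.

Lemma Phi_enc o c n m : Phi o (enc c) n m <-> ev o c [n] m.
Proof.
  split.
  - intros [c' [H1 H2]]. apply enc_inj in H1. subst. exact H2.
  - intros H. exists c. auto.
Qed.

Lemma ev_det_all o :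
  (forall c a y y', ev o c a y -> ev o c a y' -> y = y') /\
  (forall gs a ys ys', evs o gs a ys -> evs o gs a ys' -> ys = ys').
Proof.
  assert (HH := code_mut (fun c => forall a y y', ev o c a y -> ev o c a y' -> y = y')
                  (fun gs => forall a ys ys', evs o gs a ys -> evs o gs a ys' -> ys = ys')).
  assert (HH2 := codes_mut (fun c => forall a y y', ev o c a y -> ev o c a y' -> y = y')
                  (fun gs => forall a ys ys', evs o gs a ys -> evs o gs a ys' -> ys = ys')).
  match type of HH with ?A -> ?B -> ?C -> ?D -> ?E -> ?F -> ?G -> ?H -> ?I -> _ =>
    assert (A /\ B /\ C /\ D /\ E /\ F /\ G /\ H /\ I) as [h1 [h2 [h3 [h4 [h5 [h6 [h7 [h8 h9]]]]]]]] end.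
  { repeat split.
    - intros a y y' H1 H2; inversion H1; inversion H2; congruence.
    - intros a y y' H1 H2; inversion H1; inversion H2; congruence.
    - intros i a y y' H1 H2; inversion H1; inversion H2; congruence.
    - intros a y y' H1 H2; inversion H1; inversion H2; congruence.
    - intros f IHf gs IHgs a y y' H1 H2; inversion H1; inversion H2; subst.
      assert (bs = bs0) by eauto. subst. eauto.
    - intros f IHf g IHg a y y' H1. revert y'.
      remember (cPrec f g) as c eqn:Ec. revert Ec.
      induction H1; intros Ec y' H2; try discriminate; injection Ec as <- <-.
      + inversion H2; subst. eauto.
      + inversion H2; subst. assert (z = z0) by (eapply IHev1; eauto). subst. eauto.
    - intros f IHf a y y' H1 H2; inversion H1; inversion H2; subst.
      destruct (lt_eq_lt_dec y y') as [[Hl|Hl]|Hl]; auto.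
      + destruct (H8 y Hl) as [k Hk]. exfalso. pose proof (IHf _ _ _ H0 Hk). discriminate.
      + destruct (H3 y' Hl) as [k Hk]. exfalso. pose proof (IHf _ _ _ H7 Hk). discriminate.
    - intros a ys ys' H1 H2; inversion H1; inversion H2; congruence.
    - intros g IHg gs IHgs a ys ys' H1 H2; inversion H1; inversion H2; subst.
      f_equal; eauto. }
  split; [apply HH|apply HH2]; auto.
Qed.

Lemma ev_det o c a y y' : ev o c a y -> ev o c a y' -> y = y'.
Proof. apply ev_det_all. Qed.

Lemma Phi_det o e n m m' : Phi o e n m -> Phi o e n m' -> m = m'.
Proof.
  intros [c [E H]] [c' [E' H']]. subst. apply enc_inj in E'. subst. eapply ev_det; eauto.
Qed.

Inductive exp : Type :=
| Var : nat -> exp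
| Cst : nat -> exp
| Suc : exp -> exp
| Orc : exp -> exp
| Rec : exp -> exp -> exp -> exp
| Sub : exp -> exps -> exp
with exps : Type :=
| enil : exps
| econs : exp -> exps -> exps.

Scheme exp_mut := Induction for exp Sort Prop
with exps_mut := Induction for exps Sort Prop.

Fixpoint sem (g : nat -> nat) (env : list nat) (e : exp) {struct e} : nat :=
  match e with
  | Var i => nth i env 0
  | Cst n => n
  | Suc e => S (sem g env e)
  | Orc e => g (sem g env e)
  | Rec e b s =>
      (fix it (n : nat) : nat :=
         match n with
         | 0 => sem g env b
         | S n' => sem g (n' :: it n' :: env) s
         end) (sem g env e)
  | Sub e es => sem g (sems g env es) e
  end
with sems (g : nat -> nat) (env : list nat) (es : exps) {struct es} : list nat :=
  match es with
  | enil => []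
  | econs e es => sem g env e :: sems g env es
  end.

Fixpoint elen (es : exps) : nat := match es with enil => 0 | econs _ es => S (elen es) end.

Fixpoint cst (n : nat) : code :=
  match n with 0 => cZero | S n => cComp cSucc (ccons (cst n) cnil) end.

Fixpoint projs_from (i k : nat) : codes :=
  match k with 0 => cnil | S k => ccons (cProj i) (projs_from (S i) k) end.

Fixpoint comp (m : nat) (e : exp) {struct e} : code :=
  match e with
  | Var i => cProj i
  | Cst n => cst n
  | Suc e => cComp cSucc (ccons (comp m e) cnil)
  | Orc e => cComp cOrac (ccons (comp m e) cnil)
  | Rec e b s => cComp (cPrec (comp m b) (comp (S (S m)) s)) (ccons (comp m e) (projs_from 0 m))
  | Sub e es => cComp (comp (elen es) e) (comps m es)
  end
with comps (m : nat) (es : exps) {struct es} : codes :=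
  match es with
  | enil => cnil
  | econs e es => ccons (comp m e) (comps m es)
  end.

Lemma ev_cst o n a : ev o (cst n) a n.
Proof.
  induction n; simpl.
  - constructor.
  - eapply evComp. constructor. exact IHn. constructor.
    change (S n) with (S (hd 0 [n])). constructor.
Qed.

Lemma ev_projs o env i k : i + k <= length env ->
  evs o (projs_from i k) env (firstn k (skipn i env)).
Proof.
  revert i. induction k; intros i Hl; simpl.
  - constructor.
  - destruct (skipn i env) eqn:E.
    + exfalso. assert (length (skipn i env) = 0) by (rewrite E; auto).
      rewrite length_skipn in H. lia.
    + assert (nth i env 0 = n).
      { rewrite <- (firstn_skipn i env) at 1. rewrite E.
        rewrite app_nth2; rewrite length_firstn; [|lia].
        replace (i - Init.Nat.min i (length env)) with 0 by lia. reflexivity. }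
      constructor.
      * rewrite <- H. constructor.
      * assert (skipn (S i) env = l).
        { replace (S i) with (1 + i) by lia. rewrite <- skipn_skipn. rewrite E. reflexivity. }
        rewrite <- H0. apply IHk. lia.
Qed.

Lemma ev_projs_all o env : evs o (projs_from 0 (length env)) env env.
Proof.
  pose proof (ev_projs o env 0 (length env) ltac:(lia)). simpl in H.
  rewrite firstn_all in H. exact H.
Qed.

Lemma sems_length g env es : length (sems g env es) = elen es.
Proof. induction es; simpl; auto. Qed.

Lemma comp_correct g :
  (forall e m env, length env = m -> ev (tot g) (comp m e) env (sem g env e)) /\
  (forall es m env, length env = m -> evs (tot g) (comps m es) env (sems g env es)).
Proof.
  pose (P := fun e => forall m env, length env = m -> ev (tot g) (comp m e) env (sem g env e)).
  pose (Q := fun es => forall m env, length env = m -> evs (tot g) (comps m es) env (sems g env es)).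
  assert (HH := exp_mut P Q). assert (HH2 := exps_mut P Q).
  match type of HH with ?A -> ?B -> ?C -> ?D -> ?E -> ?F -> ?G -> ?H -> _ =>
    assert (A /\ B /\ C /\ D /\ E /\ F /\ G /\ H) as [h1 [h2 [h3 [h4 [h5 [h6 [h7 h8]]]]]]] end.
  { unfold P, Q; repeat split; simpl; intros.
  - constructor.
  - apply ev_cst.
  - eapply evComp. constructor. eauto. constructor.
    change (S (sem g env e)) with (S (hd 0 [sem g env e])). constructor.
  - eapply evComp. constructor. eauto. constructor.
    constructor. reflexivity.
  - eapply evComp. constructor. eauto. subst m. apply ev_projs_all.
    generalize (sem g env e). intros n. induction n.
    + constructor. eauto.
    + econstructor. exact IHn. apply H1. simpl. lia.
  - eapply evComp. apply H0. eauto. apply H. apply sems_length.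
  - constructor.
  - constructor; eauto. }
  split; [apply HH|apply HH2]; auto.
Qed.

Lemma comp_ok g e env : ev (tot g) (comp (length env) e) env (sem g env e).
Proof. apply comp_correct; auto. Qed.

Fixpoint subst (t : code) (c : code) : code :=
  match c with
  | cOrac => t
  | cComp f gs => cComp (subst t f) (substs t gs)
  | cPrec f g => cPrec (subst t f) (subst t g)
  | cMin f => cMin (subst t f)
  | c => c
  end
with substs (t : code) (gs : codes) : codes :=
  match gs with
  | cnil => cnil
  | ccons g gs => ccons (subst t g) (substs t gs)
  end.

Lemma code_ind2 (P : code -> Prop) (Q : codes -> Prop) :
  P cZero -> P cSucc -> (forall i, P (cProj i)) -> P cOrac ->
  (forall f, P f -> forall gs, Q gs -> P (cComp f gs)) ->
  (forall f, P f -> forall g, P g -> P (cPrec f g)) ->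
  (forall f, P f -> P (cMin f)) ->
  Q cnil -> (forall g, P g -> forall gs, Q gs -> Q (ccons g gs)) ->
  (forall c, P c) /\ (forall gs, Q gs).
Proof.
  intros. split; [apply (code_mut P Q)|apply (codes_mut P Q)]; auto.
Qed.

Lemma subst_ok o o' t :
  (forall a y, o (hd 0 a) = Some y -> ev o' t a y) ->
  forall c a y, ev o c a y -> ev o' (subst t c) a y.
Proof.
  intros Ht.
  enough (HH : (forall c a y, ev o c a y -> ev o' (subst t c) a y) /\
                (forall gs a ys, evs o gs a ys -> evs o' (substs t gs) a ys)) by apply HH.
  apply code_ind2; simpl; intros.
  - inversion H; constructor.
  - inversion H; constructor.
  - inversion H; constructor.
  - inversion H; subst. auto.
  - inversion H1; subst. econstructor; eauto.
  - remember (cPrec f g) as c eqn:Ec. revert Ec.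
    induction H1; intros Ec; try discriminate; injection Ec as <- <-.
    + constructor; auto.
    + econstructor; eauto.
  - inversion H0; subst. constructor; auto.
    intros m Hm. match goal with HH : forall m, m < _ -> _ |- _ => destruct (HH m Hm) as [k Hk] end. eauto.
  - inversion H; constructor.
  - inversion H1; subst. constructor; eauto.
Qed.

Lemma comp_tot_code X g : comp_tot X g -> exists c, forall n, ev (tot (chi X)) c [n] (g n).
Proof.
  intros [e He]. destruct (He 0) as [c [Ec _]]. exists c. intros n.
  destruct (He n) as [c' [Ec' H]]. subst. apply enc_inj in Ec'. subst. exact H.
Qed.

Lemma reduce_tot X Y g : turing_le X Y -> comp_tot X g -> comp_part Y (tot g).
Proof.
  intros HXY Hg. apply comp_tot_code in Hg as [c Hc].
  apply comp_tot_code in HXY as [cx Hx].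
  set (t := cComp cx (ccons (cProj 0) cnil)).
  assert (Ht : forall a y, tot (chi X) (hd 0 a) = Some y -> ev (tot (chi Y)) t a y).
  { intros a y H. unfold tot in H. injection H as <-. replace (hd 0 a) with (nth 0 a 0) by (destruct a; reflexivity). eapply evComp.
    - constructor. constructor. constructor.
    - apply Hx. }
  exists (enc (subst t c)). intros n m. rewrite Phi_enc. split.
  - intros H. injection H as <-. apply (subst_ok _ _ _ Ht). apply Hc.
  - intros H. assert (ev (tot (chi Y)) (subst t c) [n] (g n)) by (apply (subst_ok _ _ _ Ht); apply Hc).
    unfold tot; f_equal. eapply ev_det; eauto.
Qed.

Definition Femb X Y (HXY : turing_le X Y) (a : K2X X) : BY Y :=
  exist _ (tot (proj1_sig a)) (reduce_tot X Y _ HXY (proj2_sig a)).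

Lemma backward X Y : turing_le X Y -> exists F : K2X X -> BY Y, embedding_K2X_BY X Y F.
Proof.
  intros HXY. exists (Femb X Y HXY). split.
  - intros [a Ha] [b Hb] E. unfold Femb in E. simpl in E.
    apply (f_equal (@proj1_sig _ _)) in E. simpl in E.
    assert (a = b).
    { apply functional_extensionality. intros n. apply (f_equal (fun f => f n)) in E.
      unfold tot in E. congruence. }
    subst. f_equal. apply proof_irrelevance.
  - intros [a Ha] [b Hb] [c Hc] H. simpl in *. unfold appB, appK2 in *.
    intros n m. split.
    + intros E. unfold tot in E. injection E as <-. exists (a 0). split; auto.
    + intros [e [Ee HP]]. unfold tot in Ee. injection Ee as <-. unfold tot.
      f_equal. eapply Phi_det; eauto.
Qed.

Definition iterR (f : nat -> nat -> nat) (b : nat) : nat -> nat :=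
  fix it n := match n with 0 => b | S n => f n (it n) end.

#[export] Instance iterR_proper :
  Proper (pointwise_relation nat (pointwise_relation nat eq) ==> eq ==> eq ==> eq) iterR.
Proof. intros f f' Hf b b' <- n n' <-. induction n; simpl; auto. rewrite IHn. apply Hf. Qed.

Lemma sem_Rec g env e b s :
  sem g env (Rec e b s) = iterR (fun n acc => sem g (n :: acc :: env) s) (sem g env b) (sem g env e).
Proof. simpl. generalize (sem g env e). induction n; simpl; congruence. Qed.

Lemma sem_Sub g env e es : sem g env (Sub e es) = sem g (sems g env es) e.
Proof. reflexivity. Qed.

Notation "⟨ x , .. , y ⟩" := (econs x .. (econs y enil) ..).

Definition PRED e := Sub (Rec (Var 0) (Cst 0) (Var 0)) ⟨e⟩.
Definition ADD a b := Sub (Rec (Var 0) (Var 1) (Suc (Var 1))) ⟨a, b⟩.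
Definition SUBT a b := Sub (Rec (Var 1) (Var 0) (PRED (Var 1))) ⟨a, b⟩.
Definition IFZ c a b := Sub (Rec (Var 0) (Var 1) (Var 4)) ⟨c, a, b⟩.
Definition NOT a := IFZ a (Cst 1) (Cst 0).
Definition AND a b := IFZ a (Cst 0) (IFZ b (Cst 0) (Cst 1)).
Definition OR a b := IFZ a (IFZ b (Cst 0) (Cst 1)) (Cst 1).
Definition EQB a b := NOT (ADD (SUBT a b) (SUBT b a)).
Definition LEB a b := NOT (SUBT a b).
Definition LTB a b := NOT (SUBT (Suc a) b).
Definition EVEN e := Sub (Rec (Var 0) (Cst 1) (SUBT (Cst 1) (Var 1))) ⟨e⟩.
Definition DIV2 e := Sub (Rec (Var 0) (Cst 0) (ADD (Var 1) (NOT (EVEN (Var 0))))) ⟨e⟩.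

Arguments PRED : simpl never. Arguments ADD : simpl never. Arguments SUBT : simpl never.
Arguments IFZ : simpl never. Arguments NOT : simpl never. Arguments AND : simpl never.
Arguments OR : simpl never. Arguments EQB : simpl never. Arguments LEB : simpl never.
Arguments LTB : simpl never. Arguments EVEN : simpl never. Arguments DIV2 : simpl never.

Lemma sem_PRED g env e : sem g env (PRED e) = pred (sem g env e).
Proof. unfold PRED. rewrite sem_Sub, sem_Rec. cbn [sems sem nth]. destruct (sem g env e); reflexivity. Qed.

Lemma sem_ADD g env a b : sem g env (ADD a b) = sem g env a + sem g env b.
Proof. unfold ADD. rewrite sem_Sub, sem_Rec. cbn [sems sem nth].
  generalize (sem g env a) (sem g env b). intros x y. induction x; cbn [iterR]; lia. Qed.

Lemma sem_SUBT g env a b : sem g env (SUBT a b) = sem g env a - sem g env b.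
Proof.
  unfold SUBT. rewrite sem_Sub, sem_Rec. cbn [sems sem nth]. setoid_rewrite sem_PRED. cbn [nth sem].
  generalize (sem g env a) (sem g env b). intros x y. induction y; cbn [iterR]; [lia| rewrite IHy; lia].
Qed.

Lemma sem_IFZ g env c a b : sem g env (IFZ c a b) =
  match sem g env c with 0 => sem g env a | _ => sem g env b end.
Proof. unfold IFZ. rewrite sem_Sub, sem_Rec. cbn [sems sem nth]. destruct (sem g env c); reflexivity. Qed.

Definition truthy n := n <> 0.

Lemma sem_NOT g env a : truthy (sem g env (NOT a)) <-> sem g env a = 0.
Proof. unfold NOT, truthy. rewrite sem_IFZ. destruct (sem g env a); simpl; split; auto; lia. Qed.

Lemma sem_AND g env a b : truthy (sem g env (AND a b)) <-> truthy (sem g env a) /\ truthy (sem g env b).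
Proof. unfold AND, truthy. rewrite !sem_IFZ. destruct (sem g env a), (sem g env b); simpl; lia. Qed.

Lemma sem_OR g env a b : truthy (sem g env (OR a b)) <-> truthy (sem g env a) \/ truthy (sem g env b).
Proof. unfold OR, truthy. rewrite !sem_IFZ. destruct (sem g env a), (sem g env b); simpl; lia. Qed.

Lemma sem_EQB g env a b : truthy (sem g env (EQB a b)) <-> sem g env a = sem g env b.
Proof. unfold EQB. rewrite sem_NOT, sem_ADD, !sem_SUBT. lia. Qed.

Lemma sem_LEB g env a b : truthy (sem g env (LEB a b)) <-> sem g env a <= sem g env b.
Proof. unfold LEB. rewrite sem_NOT, !sem_SUBT. lia. Qed.

Lemma sem_LTB g env a b : truthy (sem g env (LTB a b)) <-> sem g env a < sem g env b.
Proof. unfold LTB. rewrite sem_NOT, !sem_SUBT. cbn [sem]. lia. Qed.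

Lemma sem_NOT01 g env a : sem g env (NOT a) = if sem g env a =? 0 then 1 else 0.
Proof. unfold NOT. rewrite sem_IFZ. destruct (sem g env a); reflexivity. Qed.

Lemma sem_EVEN g env e : sem g env (EVEN e) = if Nat.even (sem g env e) then 1 else 0.
Proof.
  unfold EVEN. rewrite sem_Sub, sem_Rec. cbn [sems sem nth]. setoid_rewrite sem_SUBT. cbn [nth sem].
  generalize (sem g env e). intros x. induction x; cbn [iterR]; auto.
  rewrite IHx. rewrite Nat.even_succ, <- Nat.negb_even.
  destruct (Nat.even x); reflexivity.
Qed.

Lemma div2_S n : Nat.div2 (S n) = Nat.div2 n + (if Nat.even n then 0 else 1).
Proof.
  assert (forall n, (Nat.div2 (S n) = Nat.div2 n + (if Nat.even n then 0 else 1)) /\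
                    (Nat.div2 (S (S n)) = Nat.div2 (S n) + (if Nat.even (S n) then 0 else 1))).
  { induction n0; [simpl; auto|]. destruct IHn0 as [H1 H2]. split; auto.
    change (Nat.div2 (S (S (S n0)))) with (S (Nat.div2 (S n0))).
    change (Nat.even (S (S n0))) with (Nat.even n0).
    rewrite H1. rewrite Nat.even_succ, <- Nat.negb_even in *.
    change (Nat.div2 (S (S n0))) with (S (Nat.div2 n0)). destruct (Nat.even n0); simpl; lia. }
  apply H.
Qed.

Lemma sem_DIV2 g env e : sem g env (DIV2 e) = Nat.div2 (sem g env e).
Proof.
  unfold DIV2. rewrite sem_Sub, sem_Rec. cbn [sems sem nth]. setoid_rewrite sem_ADD.
  setoid_rewrite sem_NOT01. setoid_rewrite sem_EVEN. cbn [nth sem].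
  generalize (sem g env e). intros n. induction n; cbn [iterR]; auto.
  rewrite IHn. clear IHn. rewrite div2_S. destruct (Nat.even n); reflexivity.
Qed.

Fixpoint tri n := match n with 0 => 0 | S n => tri n + S n end.
Definition mypair a b := tri (a + b) + b.

Definition TRI e := Sub (Rec (Var 0) (Cst 0) (ADD (Var 1) (Suc (Var 0)))) ⟨e⟩.
Arguments TRI : simpl never.
Lemma sem_TRI g env e : sem g env (TRI e) = tri (sem g env e).
Proof.
  unfold TRI. rewrite sem_Sub, sem_Rec. cbn [sems sem nth]. setoid_rewrite sem_ADD. cbn [nth sem].
  generalize (sem g env e). intros n. induction n; cbn [iterR tri]; try rewrite IHn; lia.
Qed.

Definition PAIR a b := ADD (TRI (ADD a b)) b.
Arguments PAIR : simpl never.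
Lemma sem_PAIR g env a b : sem g env (PAIR a b) = mypair (sem g env a) (sem g env b).
Proof. unfold PAIR, mypair. rewrite sem_ADD, sem_TRI, sem_ADD. reflexivity. Qed.

Definition unw z := iterR (fun n acc => acc + (if tri (S n) <=? z then 1 else 0)) 0 z.
Definition sndu z := z - tri (unw z).
Definition fstu z := unw z - sndu z.

Definition UNW e := Sub (Rec (Var 0) (Cst 0) (ADD (Var 1) (LEB (TRI (Suc (Var 0))) (Var 2)))) ⟨e⟩.
Arguments UNW : simpl never.
Lemma sem_LEB01 g env a b : sem g env (LEB a b) = if sem g env a <=? sem g env b then 1 else 0.
Proof. unfold LEB. rewrite sem_NOT01, sem_SUBT.
  destruct (sem g env a <=? sem g env b) eqn:E; [apply Nat.leb_le in E|apply Nat.leb_gt in E];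
  destruct (sem g env a - sem g env b =? 0) eqn:E2; try reflexivity;
  [apply Nat.eqb_neq in E2|apply Nat.eqb_eq in E2]; lia. Qed.

Lemma sem_UNW g env e : sem g env (UNW e) = unw (sem g env e).
Proof.
  unfold UNW, unw. rewrite sem_Sub, sem_Rec. cbn [sems sem nth]. setoid_rewrite sem_ADD.
  setoid_rewrite sem_LEB01. setoid_rewrite sem_TRI. cbn [nth sem].
  reflexivity.
Qed.

Definition SNDU e := Sub (SUBT (Var 0) (TRI (UNW (Var 0)))) ⟨e⟩.
Definition FSTU e := Sub (SUBT (UNW (Var 0)) (SNDU (Var 0))) ⟨e⟩.
Arguments SNDU : simpl never. Arguments FSTU : simpl never.
Lemma sem_SNDU g env e : sem g env (SNDU e) = sndu (sem g env e).
Proof. unfold SNDU. rewrite sem_Sub, sem_SUBT, sem_TRI, sem_UNW. reflexivity. Qed.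
Lemma sem_FSTU g env e : sem g env (FSTU e) = fstu (sem g env e).
Proof. unfold FSTU. rewrite sem_Sub, sem_SUBT, sem_SNDU, sem_UNW. reflexivity. Qed.

Lemma tri_le n : n <= tri n.
Proof. induction n; simpl; lia. Qed.
Lemma tri_mono' a b : a <= b -> tri a <= tri b.
Proof. induction 1; simpl; lia. Qed.

Lemma unw_spec z s : tri s <= z < tri (S s) -> unw z = s.
Proof.
  intros [H1 H2]. simpl in H2.
  assert (Hs : s <= z) by (pose proof (tri_le s); lia).
  assert (forall n, n <= z -> iterR (fun n acc => acc + (if tri (S n) <=? z then 1 else 0)) 0 n = Nat.min n s).
  { induction n; intros Hn; cbn [iterR]; auto.
    rewrite IHn by lia. destruct (tri (S n) <=? z) eqn:E.
    - apply Nat.leb_le in E. assert (n < s).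
      { destruct (le_lt_dec s n); auto. pose proof (tri_mono' (S s) (S n) ltac:(lia)). simpl in *. lia. }
      lia.
    - apply Nat.leb_gt in E. assert (s <= n).
      { destruct (le_lt_dec s n); auto. pose proof (tri_mono' (S n) s ltac:(lia)). lia. }
      lia. }
  unfold unw. rewrite H by lia. lia.
Qed.

Lemma unw_pair a b : unw (mypair a b) = a + b.
Proof. apply unw_spec. unfold mypair. simpl. lia. Qed.

Lemma fstu_pair a b : fstu (mypair a b) = a.
Proof. unfold fstu, sndu. rewrite unw_pair. unfold mypair. lia. Qed.
Lemma sndu_pair a b : sndu (mypair a b) = b.
Proof. unfold sndu. rewrite unw_pair. unfold mypair. lia. Qed.

Lemma tri_exists z : exists s, tri s <= z < tri (S s).
Proof.
  induction z.
  - exists 0. simpl. lia.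
  - destruct IHz as [s [H1 H2]]. simpl in H2.
    destruct (Nat.eq_dec (S z) (tri s + S s)).
    + exists (S s). simpl. lia.
    + exists s. simpl. lia.
Qed.

Lemma pair_surj z : mypair (fstu z) (sndu z) = z.
Proof.
  destruct (tri_exists z) as [s Hs]. pose proof (unw_spec z s Hs).
  unfold fstu, sndu, mypair. rewrite H. simpl in Hs.
  replace (s - (z - tri s) + (z - tri s)) with s by lia. lia.
Qed.

Lemma sndu_le z : sndu z <= z.
Proof. unfold sndu. lia. Qed.

Lemma mypair_ge_r a b : b <= mypair a b.
Proof. unfold mypair. lia. Qed.

Fixpoint lenc (l : list nat) : nat :=
  match l with [] => 0 | x :: l => S (mypair x (lenc l)) end.

Definition lhd c := fstu (pred c).
Definition ltl c := sndu (pred c).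

Lemma fstu0 : fstu 0 = 0.
Proof. change 0 with (mypair 0 0) at 1. apply fstu_pair. Qed.
Lemma sndu0 : sndu 0 = 0.
Proof. change 0 with (mypair 0 0) at 1. apply sndu_pair. Qed.

Lemma lhd_enc l : lhd (lenc l) = hd 0 l.
Proof. destruct l; unfold lhd; simpl; [apply fstu0|apply fstu_pair]. Qed.
Lemma ltl_enc l : ltl (lenc l) = lenc (tl l).
Proof. destruct l; unfold ltl; simpl; [apply sndu0|apply sndu_pair]. Qed.

Lemma lenc_inj l l' : lenc l = lenc l' -> l = l'.
Proof.
  revert l'; induction l; intros [|x l'] H; simpl in *; try discriminate; auto.
  injection H as H. pose proof (f_equal fstu H). pose proof (f_equal sndu H).
  rewrite !fstu_pair in H0. rewrite !sndu_pair in H1. f_equal; auto.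
Qed.

Lemma lenc_surj c : exists l, lenc l = c.
Proof.
  induction c as [c IH] using (well_founded_induction lt_wf).
  destruct c as [|p].
  - exists []. reflexivity.
  - destruct (IH (sndu p)) as [l Hl]. { pose proof (sndu_le p). lia. }
    exists (fstu p :: l). simpl. rewrite Hl, pair_surj. reflexivity.
Qed.

Lemma lenc_ge l : length l <= lenc l.
Proof. induction l; simpl; auto. pose proof (mypair_ge_r a (lenc l)). lia. Qed.

Definition LCONS x l := Suc (PAIR x l).
Definition LHD c := FSTU (PRED c).
Definition LTL c := SNDU (PRED c).
Definition TLN i c := Sub (Rec (Var 0) (Var 1) (LTL (Var 1))) ⟨i, c⟩.
Definition NTH i c := LHD (TLN i c).
Definition LEN c := Sub (Rec (Var 0) (Cst 0) (ADD (Var 1) (NOT (EQB (TLN (Var 0) (Var 2)) (Cst 0))))) ⟨c⟩.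
Arguments LCONS : simpl never. Arguments LHD : simpl never. Arguments LTL : simpl never.
Arguments TLN : simpl never. Arguments NTH : simpl never. Arguments LEN : simpl never.

Lemma sem_LCONS g env x l : sem g env (LCONS x l) = S (mypair (sem g env x) (sem g env l)).
Proof. unfold LCONS. cbn [sem]. rewrite sem_PAIR. reflexivity. Qed.
Lemma sem_LHD g env c : sem g env (LHD c) = lhd (sem g env c).
Proof. unfold LHD. rewrite sem_FSTU, sem_PRED. reflexivity. Qed.
Lemma sem_LTL g env c : sem g env (LTL c) = ltl (sem g env c).
Proof. unfold LTL. rewrite sem_SNDU, sem_PRED. reflexivity. Qed.

Lemma sem_LCONS_enc g env x l v a : sem g env x = v -> sem g env l = lenc a -> sem g env (LCONS x l) = lenc (v :: a).
Proof. intros. rewrite sem_LCONS. simpl. congruence. Qed.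

Lemma sem_TLN g env i c : sem g env (TLN i c) = Nat.iter (sem g env i) ltl (sem g env c).
Proof.
  unfold TLN. rewrite sem_Sub, sem_Rec. cbn [sems sem nth]. setoid_rewrite sem_LTL. cbn [sem nth].
  generalize (sem g env i) (sem g env c). intros n x. induction n; simpl; congruence.
Qed.

Lemma iter_ltl n l : Nat.iter n ltl (lenc l) = lenc (skipn n l).
Proof.
  induction n; simpl; auto. rewrite IHn, ltl_enc. f_equal.
  clear IHn. revert l; induction n; intros [|x l]; simpl; auto.
Qed.

Lemma sem_NTH g env i c l : sem g env c = lenc l -> sem g env (NTH i c) = nth (sem g env i) l 0.
Proof.
  intros H. unfold NTH. rewrite sem_LHD, sem_TLN, H, iter_ltl, lhd_enc.
  generalize (sem g env i). intros n. clear H. revert l; induction n; intros [|x l]; simpl; auto.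
Qed.

Lemma sem_EQB01 g env a b : sem g env (EQB a b) = if sem g env a =? sem g env b then 1 else 0.
Proof.
  unfold EQB. rewrite sem_NOT01, sem_ADD, !sem_SUBT.
  destruct (sem g env a =? sem g env b) eqn:E;
  [apply Nat.eqb_eq in E|apply Nat.eqb_neq in E];
  destruct (_ =? 0) eqn:E2; try reflexivity; [apply Nat.eqb_neq in E2|apply Nat.eqb_eq in E2]; lia.
Qed.

Lemma sem_LEN g env c l : sem g env c = lenc l -> sem g env (LEN c) = length l.
Proof.
  intros H. unfold LEN. rewrite sem_Sub, sem_Rec. cbn [sems sem nth].
  setoid_rewrite sem_ADD. setoid_rewrite sem_NOT01. setoid_rewrite sem_EQB01.
  setoid_rewrite sem_TLN. cbn [sem nth]. rewrite H.
  assert (forall n, iterR (fun n0 acc : nat => acc + (if (if Nat.iter n0 ltl (lenc l) =? 0 then 1 else 0) =? 0 then 1 else 0)) 0 n = Nat.min n (length l)).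
  { induction n; cbn [iterR]; auto. rewrite IHn, iter_ltl.
    destruct (skipn n l) eqn:E.
    - assert (length l <= n). { apply skipn_all_iff in E. auto. }
      cbn [lenc Nat.eqb]. lia.
    - assert (n < length l). { assert (length (skipn n l) > 0) by (rewrite E; simpl; lia). rewrite length_skipn in H0. lia. }
      cbn [lenc Nat.eqb]. lia. }
  rewrite H0. pose proof (lenc_ge l). lia.
Qed.

Fixpoint vars_from (i k : nat) : exps :=
  match k with 0 => enil | S k => econs (Var i) (vars_from (S i) k) end.

Lemma sems_vars g env i k : sems g env (vars_from i k) = firstn k (skipn i env) ++ repeat 0 (k - (length env - i)).
Proof.
  revert i. induction k; intros i; simpl; auto.
  rewrite IHk. destruct (skipn i env) eqn:E.
  - assert (length env <= i) by (apply skipn_all_iff in E; auto).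
    rewrite nth_overflow by lia. assert (skipn (S i) env = []) by (apply skipn_all2; lia).
    rewrite H0. replace (length env - i) with 0 by lia. replace (length env - S i) with 0 by lia. rewrite firstn_nil. simpl. rewrite Nat.sub_0_r. reflexivity.
  - assert (nth i env 0 = n /\ skipn (S i) env = l).
    { clear IHk. revert i E; induction env; intros i E; destruct i; simpl in *; try discriminate.
      - injection E as -> ->; split; reflexivity.
      - apply IHenv; auto. }
    destruct H as [-> ->]. simpl. f_equal. assert (length (skipn i env) = S (length l)) by (rewrite E; auto). rewrite length_skipn in H. rewrite H. f_equal. f_equal. lia.

Qed.

Lemma sems_vars_env g env pre : sems g (pre ++ env) (vars_from (length pre) (length env)) = env.
Proof.
  rewrite sems_vars. rewrite skipn_app. replace (skipn (length pre) pre) with (@nil nat).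
  2:{ symmetry. apply skipn_all2. lia. }
  simpl. rewrite length_app. replace (length pre - length pre) with 0 by lia.
  rewrite firstn_all. replace (length env - (length pre + length env - length pre)) with 0 by lia.
  simpl. apply app_nil_r.
Qed.

Definition EXB m n body :=
  Sub (Rec (Var 0) (Cst 0) (OR (Var 1) (Sub body (econs (Var 0) (vars_from 3 m))))) (econs n (vars_from 0 m)).
Definition FORB m n body :=
  Sub (Rec (Var 0) (Cst 1) (AND (Var 1) (Sub body (econs (Var 0) (vars_from 3 m))))) (econs n (vars_from 0 m)).
Arguments EXB : simpl never. Arguments FORB : simpl never.

Lemma sem_OR01 g env a b : sem g env (OR a b) = if sem g env a =? 0 then (if sem g env b =? 0 then 0 else 1) else 1.
Proof. unfold OR. rewrite !sem_IFZ. destruct (sem g env a), (sem g env b); reflexivity. Qed.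
Lemma sem_AND01 g env a b : sem g env (AND a b) = if sem g env a =? 0 then 0 else (if sem g env b =? 0 then 0 else 1).
Proof. unfold AND. rewrite !sem_IFZ. destruct (sem g env a), (sem g env b); reflexivity. Qed.

Lemma sems_vars3 g env a b c : sems g (a :: b :: c :: env) (vars_from 3 (length env)) = env.
Proof. exact (sems_vars_env g env [a; b; c]). Qed.

Lemma sem_EXB g env m n body : length env = m ->
  (truthy (sem g env (EXB m n body)) <-> exists i, i < sem g env n /\ truthy (sem g (i :: env) body)).
Proof.
  intros Hm. subst m. unfold EXB. rewrite sem_Sub, sem_Rec. cbn [sems sem nth].
  replace (sems g env (vars_from 0 (length env))) with env by (symmetry; exact (sems_vars_env g env [])).
  setoid_rewrite sem_OR01. cbn [sem nth sems]. setoid_rewrite sems_vars3.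
  generalize (sem g env n). intros N. unfold truthy. induction N; cbn [iterR].
  - split; [lia|]. intros [i [Hi _]]; lia.
  - destruct (iterR _ _ N =? 0) eqn:E1.
    + apply Nat.eqb_eq in E1. destruct (sem g (N :: env) body =? 0) eqn:E2.
      * apply Nat.eqb_eq in E2. split; [lia|]. intros [i [Hi Hb]].
        destruct (Nat.eq_dec i N); [subst; lia|]. exfalso. apply (proj2 IHN); [exists i; split; [lia|exact Hb]|exact E1].
      * apply Nat.eqb_neq in E2. split; [|lia]. intros _. exists N; split; auto.
    + apply Nat.eqb_neq in E1. split; [|lia]. intros _. destruct (proj1 IHN E1) as [i [Hi Hb]].
      exists i; split; auto.
Qed.

Lemma sem_FORB g env m n body : length env = m ->
  (truthy (sem g env (FORB m n body)) <-> forall i, i < sem g env n -> truthy (sem g (i :: env) body)).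
Proof.
  intros Hm. subst m. unfold FORB. rewrite sem_Sub, sem_Rec. cbn [sems sem nth].
  replace (sems g env (vars_from 0 (length env))) with env by (symmetry; exact (sems_vars_env g env [])).
  setoid_rewrite sem_AND01. cbn [sem nth sems]. setoid_rewrite sems_vars3.
  generalize (sem g env n). intros N. unfold truthy. induction N; cbn [iterR].
  - split; [intros; lia|]. lia.
  - destruct (iterR _ _ N =? 0) eqn:E1.
    + apply Nat.eqb_eq in E1. split; [lia|]. intros H. exfalso. apply (proj2 IHN); auto.
    + apply Nat.eqb_neq in E1. destruct (sem g (N :: env) body =? 0) eqn:E2.
      * apply Nat.eqb_eq in E2. split; [lia|]. intros H. exfalso. apply (H N); auto.
      * apply Nat.eqb_neq in E2. split; [|lia]. intros _ i Hi.
        destruct (Nat.eq_dec i N); [subst; auto|]. apply (proj1 IHN E1). lia.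
Qed.


Fixpoint cl (gs : codes) : list code :=
  match gs with cnil => [] | ccons g gs => g :: cl gs end.

Record sys := mkSys { Sb : list code; ix : code -> nat; i0 : nat; iS : nat;
                      iy1 : nat; iy2 : nat; iy3 : nat }.

Definition iy (s : sys) (j : nat) : nat :=
  if j =? 1 then iy1 s else if j =? 2 then iy2 s else iy3 s.

Inductive jd := Jd (j k ci : nat) (a : list nat) (y : nat).

Definition ctxO (Y : nat -> bool) (fy : nat -> nat -> option nat) (fN : nat -> nat -> option nat)
  (j k : nat) : nat -> option nat :=
  if j =? 0 then tot (chi Y) else join (fy j) (fN k).

Definition localC (s : sys) (Y : nat -> bool) (L : list jd) (j k ci : nat) (a : list nat) (y : nat) (c : code) : Prop :=
    match c with
    | cZero => y = 0
    | cSucc => y = S (hd 0 a)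
    | cProj i => y = nth i a 0
    | cOrac =>
        if j =? 0 then y = chi Y (hd 0 a)
        else if Nat.even (hd 0 a) then In (Jd 0 0 (iy s j) [Nat.div2 (hd 0 a)] y) L
        else match k with
             | 0 => In (Jd 0 0 (i0 s) [Nat.div2 (hd 0 a)] y) L
             | S k' => In (Jd 1 k' (iS s) [Nat.div2 (hd 0 a)] y) L
             end
    | cComp f gs =>
        exists bs, length bs = length (cl gs) /\ In (Jd j k (ix s f) bs y) L /\
          forall i, i < length (cl gs) -> In (Jd j k (ix s (nth i (cl gs) cZero)) a (nth i bs 0)) L
    | cPrec f g =>
        match a with
        | [] => False
        | 0 :: a' => In (Jd j k (ix s f) a' y) L
        | S n :: a' => exists z, In (Jd j k ci (n :: a') z) L /\ In (Jd j k (ix s g) (n :: z :: a') y) L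
        end
    | cMin f => In (Jd j k (ix s f) (y :: a) 0) L /\
                forall m, m < y -> exists z, In (Jd j k (ix s f) (m :: a) (S z)) L
    end.

Definition localP (s : sys) (Y : nat -> bool) (L : list jd) (J : jd) : Prop :=
  let '(Jd j k ci a y) := J in
  match nth_error (Sb s) ci with
  | None => False
  | Some c => localC s Y L j k ci a y c
  end.

Definition valid s Y L := forall J, In J L -> localP s Y L J.

Definition WF (s : sys) (Y : nat -> bool) (fy : nat -> nat -> option nat)
  (fN : nat -> nat -> option nat) : Prop :=
  (forall ci c, nth_error (Sb s) ci = Some c ->
     match c with
     | cComp f gs => nth_error (Sb s) (ix s f) = Some f /\
                     forall g, In g (cl gs) -> nth_error (Sb s) (ix s g) = Some g
     | cPrec f g => nth_error (Sb s) (ix s f) = Some f /\ nth_error (Sb s) (ix s g) = Some g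
     | cMin f => nth_error (Sb s) (ix s f) = Some f
     | _ => True
     end) /\
  (exists c0, nth_error (Sb s) (i0 s) = Some c0 /\
     forall x y, fN 0 x = Some y <-> ev (tot (chi Y)) c0 [x] y) /\
  (exists cs, nth_error (Sb s) (iS s) = Some cs /\
     forall k x y, fN (S k) x = Some y <-> ev (join (fy 1) (fN k)) cs [x] y) /\
  (forall j, j <> 0 -> exists cy, nth_error (Sb s) (iy s j) = Some cy /\
     forall x y, fy j x = Some y <-> ev (tot (chi Y)) cy [x] y).

Definition rank (j k : nat) := if j =? 0 then 0 else S k.

Lemma evs_of_nth o gs a bs :
  length bs = length (cl gs) ->
  (forall i, i < length (cl gs) -> ev o (nth i (cl gs) cZero) a (nth i bs 0)) ->
  evs o gs a bs.
Proof.
  revert bs. induction gs; intros bs Hl H; simpl in *.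
  - destruct bs; [constructor|discriminate].
  - destruct bs as [|b bs]; [discriminate|]. constructor.
    + apply (H 0). lia.
    + apply IHgs. simpl in Hl; lia. intros i Hi. apply (H (S i)). lia.
Qed.

Lemma soundness s Y fy fN L : WF s Y fy fN -> valid s Y L ->
  forall r j k, rank j k = r -> forall c ci a y, nth_error (Sb s) ci = Some c ->
  In (Jd j k ci a y) L -> ev (ctxO Y fy fN j k) c a y.
Proof.
  intros [W1 [[c0 [H0 E0]] [[cs [Hs Es]] W4]]] HV r.
  induction r as [r IHr] using (well_founded_induction lt_wf).
  intros j k Hr c. revert c.
  enough (HH : (forall c ci a y, nth_error (Sb s) ci = Some c -> In (Jd j k ci a y) L -> ev (ctxO Y fy fN j k) c a y) /\
               (forall gs, forall g, In g (cl gs) -> forall ci a y, nth_error (Sb s) ci = Some g -> In (Jd j k ci a y) L -> ev (ctxO Y fy fN j k) g a y))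
    by apply HH.
  apply code_ind2.
  - intros ci a y Hc HI. pose proof (HV _ HI) as HL. simpl in HL. rewrite Hc in HL. unfold localC in HL. subst. constructor.
  - intros ci a y Hc HI. pose proof (HV _ HI) as HL. simpl in HL. rewrite Hc in HL. unfold localC in HL. subst. constructor.
  - intros i ci a y Hc HI. pose proof (HV _ HI) as HL. simpl in HL. rewrite Hc in HL. unfold localC in HL. subst. constructor.
  - intros ci a y Hc HI. pose proof (HV _ HI) as HL. simpl in HL. rewrite Hc in HL. unfold localC in HL.
    constructor. unfold ctxO. destruct (j =? 0) eqn:Ej.
    + subst. reflexivity.
    + apply Nat.eqb_neq in Ej. unfold join.
      destruct (Nat.even (hd 0 a)) eqn:Eq.
      * destruct (W4 j Ej) as [cy [Hy Ey]]. apply Ey.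
        refine (IHr 0 _ 0 0 eq_refl cy _ _ _ Hy HL). unfold rank in Hr. rewrite (proj2 (Nat.eqb_neq _ _) Ej) in Hr. lia.
      * destruct k as [|k'].
        -- apply E0. refine (IHr 0 _ 0 0 eq_refl c0 _ _ _ H0 HL).
           unfold rank in Hr. rewrite (proj2 (Nat.eqb_neq _ _) Ej) in Hr. lia.
        -- apply Es. assert (Hr' : rank 1 k' < r).
           { unfold rank in *. rewrite (proj2 (Nat.eqb_neq _ _) Ej) in Hr. simpl. lia. }
           pose proof (IHr _ Hr' 1 k' eq_refl cs _ _ _ Hs HL) as HH. unfold ctxO in HH. simpl in HH. exact HH.
  - intros f IHf gs IHgs ci a y Hc HI. pose proof (HV _ HI) as HL. simpl in HL. rewrite Hc in HL. unfold localC in HL.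
    destruct (W1 _ _ Hc) as [Wf Wgs].
    destruct HL as [bs [Hl [Hf Hg]]]. apply evComp with (bs := bs).
    + apply evs_of_nth; auto. intros i Hi. eapply IHgs.
      * apply nth_In. exact Hi.
      * apply Wgs. apply nth_In. exact Hi.
      * apply Hg. exact Hi.
    + eapply IHf; eauto.
  - intros f IHf g IHg ci a y Hc HI. destruct (W1 _ _ Hc) as [Wf Wg].
    destruct a as [|n a']. { pose proof (HV _ HI) as HL. simpl in HL. rewrite Hc in HL. unfold localC in HL. contradiction. }
    revert y HI. induction n; intros y HI; pose proof (HV _ HI) as HL; simpl in HL; rewrite Hc in HL; unfold localC in HL.
    + constructor. eapply IHf; eauto.
    + destruct HL as [z [H1 H2]]. econstructor.
      * apply IHn. exact H1.
      * eapply IHg; eauto.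
  - intros f IHf ci a y Hc HI. pose proof (HV _ HI) as HL. simpl in HL. rewrite Hc in HL. unfold localC in HL.
    pose proof (W1 _ _ Hc) as Wf. destruct HL as [H1 H2]. constructor.
    + apply (IHf (ix s f)); auto.
    + intros m Hm. destruct (H2 m Hm) as [z Hz]. exists z. apply (IHf (ix s f)); auto.
  - intros g [].
  - intros g IHg gs IHgs g' [<-|Hin]; auto. apply IHgs. exact Hin.
Qed.

Lemma localP_mono s Y L L' J : incl L L' -> localP s Y L J -> localP s Y L' J.
Proof.
  intros Hi. destruct J as [j k ci a y]. simpl.
  destruct (nth_error (Sb s) ci) as [c|]; auto. unfold localC.
  destruct c; auto.
  - destruct (j =? 0); auto. destruct (Nat.even (hd 0 a)); auto. destruct k; auto.
  - intros [bs [H1 [H2 H3]]]. exists bs. repeat split; auto.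
  - destruct a as [|[|n] a']; auto. intros [z [H1 H2]]. exists z. auto.
  - intros [H1 H2]. split; auto. intros m Hm. destruct (H2 m Hm) as [z Hz]. eauto.
Qed.

Lemma valid_app s Y L1 L2 : valid s Y L1 -> valid s Y L2 -> valid s Y (L1 ++ L2).
Proof.
  intros H1 H2 J HJ. apply in_app_or in HJ as [HJ|HJ].
  - eapply localP_mono; [|apply H1; auto]. intros x Hx; apply in_or_app; auto.
  - eapply localP_mono; [|apply H2; auto]. intros x Hx; apply in_or_app; auto.
Qed.

Lemma valid_cons s Y L J : valid s Y L -> localP s Y (J :: L) J -> valid s Y (J :: L).
Proof.
  intros H HJ J' [<-|HJ']; auto. eapply localP_mono; [|apply H; auto]. intros x Hx; right; auto.
Qed.

Lemma valid_nil s Y : valid s Y [].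
Proof. intros J []. Qed.

Lemma completeness s Y fy fN : WF s Y fy fN ->
  forall r j k, rank j k = r -> forall c ci a y, nth_error (Sb s) ci = Some c ->
  ev (ctxO Y fy fN j k) c a y -> exists L, valid s Y L /\ In (Jd j k ci a y) L.
Proof.
  intros [W1 [[c0 [H0 E0]] [[cs [Hs Es]] W4]]] r.
  induction r as [r IHr] using (well_founded_induction lt_wf).
  intros j k Hr c. revert c.
  enough (HH : (forall c ci a y, nth_error (Sb s) ci = Some c -> ev (ctxO Y fy fN j k) c a y ->
                  exists L, valid s Y L /\ In (Jd j k ci a y) L) /\
               (forall gs a bs, (forall g, In g (cl gs) -> nth_error (Sb s) (ix s g) = Some g) ->
                  evs (ctxO Y fy fN j k) gs a bs ->
                  exists L, valid s Y L /\ length bs = length (cl gs) /\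
                    forall i, i < length (cl gs) -> In (Jd j k (ix s (nth i (cl gs) cZero)) a (nth i bs 0)) L))
    by apply HH.
  apply code_ind2.
  - intros ci a y Hc He. inversion He; subst. exists [Jd j k ci a 0]. split; [|left; auto].
    apply valid_cons; [apply valid_nil|]. simpl. rewrite Hc. unfold localC. reflexivity.
  - intros ci a y Hc He. inversion He; subst. exists [Jd j k ci a (S (hd 0 a))]. split; [|left; auto].
    apply valid_cons; [apply valid_nil|]. simpl. rewrite Hc. unfold localC. reflexivity.
  - intros i ci a y Hc He. inversion He; subst. exists [Jd j k ci a (nth i a 0)]. split; [|left; auto].
    apply valid_cons; [apply valid_nil|]. simpl. rewrite Hc. unfold localC. reflexivity.
  - intros ci a y Hc He. inversion He as [| | |a0 y0 Ho| | | |]; subst.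
    unfold ctxO in Ho. destruct (j =? 0) eqn:Ej.
    + exists [Jd j k ci a y]. split; [|left; auto].
      apply valid_cons; [apply valid_nil|]. simpl. rewrite Hc. unfold localC. rewrite Ej. unfold tot in Ho. congruence.
    + apply Nat.eqb_neq in Ej. assert (Hr0 : rank j k = S k) by (unfold rank; rewrite (proj2 (Nat.eqb_neq _ _) Ej); lia).
      unfold join in Ho. destruct (Nat.even (hd 0 a)) eqn:Eq.
      * destruct (W4 j Ej) as [cy [Hy Ey]]. apply Ey in Ho.
        destruct (IHr 0 ltac:(lia) 0 0 eq_refl cy _ _ _ Hy Ho) as [L [HV HI]].
        exists (Jd j k ci a y :: L). split; [|left; auto].
        apply valid_cons; auto. simpl. rewrite Hc. unfold localC. rewrite (proj2 (Nat.eqb_neq _ _) Ej), Eq. right; auto.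
      * destruct k as [|k'].
        -- apply E0 in Ho.
           destruct (IHr 0 ltac:(lia) 0 0 eq_refl c0 _ _ _ H0 Ho) as [L [HV HI]].
           exists (Jd j 0 ci a y :: L). split; [|left; auto].
           apply valid_cons; auto. simpl. rewrite Hc. unfold localC. rewrite (proj2 (Nat.eqb_neq _ _) Ej), Eq. right; auto.
        -- apply Es in Ho.
           destruct (IHr (S k') ltac:(lia) 1 k' eq_refl cs _ _ _ Hs Ho) as [L [HV HI]].
           exists (Jd j (S k') ci a y :: L). split; [|left; auto].
           apply valid_cons; auto. simpl. rewrite Hc. unfold localC. rewrite (proj2 (Nat.eqb_neq _ _) Ej), Eq. right; auto.
  - intros f IHf gs IHgs ci a y Hc He. destruct (W1 _ _ Hc) as [Wf Wgs].
    inversion He; subst.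
    match goal with H : evs _ _ _ _ |- _ => destruct (IHgs _ _ Wgs H) as [L1 [HV1 [Hl HI1]]] end.
    match goal with H : ev _ f _ _ |- _ => destruct (IHf _ _ _ Wf H) as [L2 [HV2 HI2]] end.
    exists (Jd j k ci a y :: L1 ++ L2). split; [|left; auto].
    apply valid_cons; [apply valid_app; auto|]. simpl. rewrite Hc. unfold localC.
    exists bs. split; auto. split.
    + right. apply in_or_app. right. auto.
    + intros i Hi. right. apply in_or_app. left. auto.
  - intros f IHf g IHg ci a y Hc He. destruct (W1 _ _ Hc) as [Wf Wg].
    remember (cPrec f g) as cc eqn:Ecc. revert Ecc.
    induction He; intros Ecc; try discriminate; injection Ecc as <- <-.
    + destruct (IHf _ _ _ Wf He) as [L [HV HI]].
      exists (Jd j k ci (0 :: a) y :: L). split; [|left; auto].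
      apply valid_cons; auto. simpl. rewrite Hc. unfold localC. right; auto.
    + destruct (IHHe1 Hc eq_refl) as [L1 [HV1 HI1]].
      destruct (IHg _ _ _ Wg He2) as [L2 [HV2 HI2]].
      exists (Jd j k ci (S n :: a) y :: L1 ++ L2). split; [|left; auto].
      apply valid_cons; [apply valid_app; auto|]. simpl. rewrite Hc. unfold localC.
      exists z. split; right; apply in_or_app; auto.
  - intros f IHf ci a y Hc He. pose proof (W1 _ _ Hc) as Wf.
    inversion He; subst.
    match goal with H : ev _ f _ 0 |- _ => destruct (IHf _ _ _ Wf H) as [L0 [HV0 HI0]] end.
    match goal with H : forall m, m < y -> _ |- _ => rename H into H3 end.
    assert (Hall : forall n, n <= y -> exists L, valid s Y L /\
              forall m, m < n -> exists z, In (Jd j k (ix s f) (m :: a) (S z)) L).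
    { induction n; intros Hn.
      - exists []. split; [apply valid_nil|]. intros m Hm; lia.
      - destruct (IHn ltac:(lia)) as [L1 [HV1 HI1]].
        destruct (H3 n ltac:(lia)) as [z Hz].
        destruct (IHf _ _ _ Wf Hz) as [L2 [HV2 HI2]].
        exists (L1 ++ L2). split; [apply valid_app; auto|].
        intros m Hm. destruct (Nat.eq_dec m n) as [->|Hne].
        + exists z. apply in_or_app; auto.
        + destruct (HI1 m ltac:(lia)) as [z' Hz']. exists z'. apply in_or_app; auto. }
    destruct (Hall y (le_n _)) as [L1 [HV1 HI1]].
    exists (Jd j k ci a y :: L0 ++ L1). split; [|left; auto].
    apply valid_cons; [apply valid_app; auto|]. simpl. rewrite Hc. unfold localC. split.
    + right. apply in_or_app; auto.
    + intros m Hm. destruct (HI1 m Hm) as [z Hz]. exists z. right. apply in_or_app; auto.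
  - intros a bs _ He. inversion He; subst. exists []. split; [apply valid_nil|]. simpl. split; auto.
    intros i Hi; lia.
  - intros g IHg gs IHgs a bs Hw He. inversion He; subst.
    assert (Wg : nth_error (Sb s) (ix s g) = Some g) by (apply Hw; left; auto).
    match goal with H : ev _ g _ _ |- _ => destruct (IHg _ _ _ Wg H) as [L1 [HV1 HI1]] end.
    match goal with H : evs _ gs _ _ |- _ => destruct (IHgs _ _ (fun g' H => Hw g' (or_intror H)) H) as [L2 [HV2 [Hl HI2]]] end.
    exists (L1 ++ L2). split; [apply valid_app; auto|]. simpl. split; [lia|].
    intros [|i] Hi; simpl.
    + apply in_or_app; auto.
    + apply in_or_app; right. apply HI2. lia.
Qed.

Definition jenc (J : jd) : nat :=
  let '(Jd j k ci a y) := J in mypair j (mypair k (mypair ci (mypair (lenc a) y))).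

Lemma jenc_inj J J' : jenc J = jenc J' -> J = J'.
Proof.
  destruct J as [j k ci a y], J' as [j' k' ci' a' y']. simpl. intros H.
  pose proof (f_equal fstu H) as H1. rewrite !fstu_pair in H1.
  apply (f_equal sndu) in H. rewrite !sndu_pair in H.
  pose proof (f_equal fstu H) as H2. rewrite !fstu_pair in H2.
  apply (f_equal sndu) in H. rewrite !sndu_pair in H.
  pose proof (f_equal fstu H) as H3. rewrite !fstu_pair in H3.
  apply (f_equal sndu) in H. rewrite !sndu_pair in H.
  pose proof (f_equal fstu H) as H4. rewrite !fstu_pair in H4.
  apply (f_equal sndu) in H. rewrite !sndu_pair in H.
  apply lenc_inj in H4. subst. reflexivity.
Qed.

Lemma jenc_surj z : exists J, jenc J = z.
Proof.
  destruct (lenc_surj (fstu (sndu (sndu (sndu z))))) as [a Ha].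
  exists (Jd (fstu z) (fstu (sndu z)) (fstu (sndu (sndu z))) a (sndu (sndu (sndu (sndu z))))).
  simpl. rewrite Ha, !pair_surj. reflexivity.
Qed.

Definition Lcode (Ls : list jd) := lenc (map jenc Ls).

Lemma Lcode_surj z : exists Ls, Lcode Ls = z.
Proof.
  destruct (lenc_surj z) as [l <-].
  assert (exists Ls, map jenc Ls = l) as [Ls HL].
  { induction l as [|x l IH]. - exists []; auto.
    - destruct IH as [Ls HL]. destruct (jenc_surj x) as [J HJ]. exists (J :: Ls). simpl. congruence. }
  exists Ls. unfold Lcode. congruence.
Qed.

Definition JMK j k ci al y := PAIR j (PAIR k (PAIR ci (PAIR al y))).
Definition JJ e := FSTU e.
Definition JK e := FSTU (SNDU e).
Definition JC e := FSTU (SNDU (SNDU e)).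
Definition JA e := FSTU (SNDU (SNDU (SNDU e))).
Definition JY e := SNDU (SNDU (SNDU (SNDU e))).
Arguments JMK : simpl never. Arguments JJ : simpl never. Arguments JK : simpl never.
Arguments JC : simpl never. Arguments JA : simpl never. Arguments JY : simpl never.

Lemma sem_JMK g env j k ci al y a :
  sem g env al = lenc a ->
  sem g env (JMK j k ci al y) = jenc (Jd (sem g env j) (sem g env k) (sem g env ci) a (sem g env y)).
Proof. intros H. unfold JMK. rewrite !sem_PAIR, H. reflexivity. Qed.

Lemma sem_fields g env e j k ci a y : sem g env e = jenc (Jd j k ci a y) ->
  sem g env (JJ e) = j /\ sem g env (JK e) = k /\ sem g env (JC e) = ci /\
  sem g env (JA e) = lenc a /\ sem g env (JY e) = y.
Proof.
  intros H. unfold JJ, JK, JC, JA, JY. rewrite !sem_FSTU, !sem_SNDU, H. simpl.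
  rewrite !sndu_pair, !fstu_pair. auto.
Qed.

Definition MEM x L := Sub (EXB 2 (LEN (Var 1)) (EQB (NTH (Var 0) (Var 2)) (Var 1))) ⟨x, L⟩.
Arguments MEM : simpl never.

Lemma In_nth_map (Ls : list jd) J :
  In J Ls <-> exists i, i < length (map jenc Ls) /\ nth i (map jenc Ls) 0 = jenc J.
Proof.
  rewrite length_map. split.
  - intros HI. apply In_nth with (d := J) in HI as [i [Hi HE]]. exists i. split; auto.
    rewrite nth_indep with (d' := jenc J) by (rewrite length_map; auto).
    rewrite map_nth. congruence.
  - intros [i [Hi HE]]. rewrite nth_indep with (d' := jenc J) in HE by (rewrite length_map; auto).
    rewrite map_nth in HE. apply jenc_inj in HE. rewrite <- HE. apply nth_In. auto.
Qed.

Lemma sem_MEM g env x L Ls J : sem g env L = Lcode Ls -> sem g env x = jenc J ->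
  (truthy (sem g env (MEM x L)) <-> In J Ls).
Proof.
  intros HL Hx. unfold MEM. rewrite sem_Sub. cbn [sems].
  rewrite sem_EXB by reflexivity.
  rewrite (sem_LEN _ _ _ (map jenc Ls)) by (cbn [sem nth]; exact HL).
  rewrite In_nth_map. split; intros [i [Hi H]]; exists i; split; auto.
  - rewrite sem_EQB in H. rewrite (sem_NTH _ _ _ _ (map jenc Ls)) in H by (cbn [sem nth]; exact HL).
    cbn [sem nth] in H. congruence.
  - rewrite sem_EQB. rewrite (sem_NTH _ _ _ _ (map jenc Ls)) by (cbn [sem nth]; exact HL).
    cbn [sem nth]. congruence.
Qed.

Definition EXL m p body := EXB m (LEN (Var p)) (Sub body (econs (NTH (Var 0) (Var (S p))) (vars_from 1 m))).
Definition FORL m p body := FORB m (LEN (Var p)) (Sub body (econs (NTH (Var 0) (Var (S p))) (vars_from 1 m))).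
Arguments EXL : simpl never. Arguments FORL : simpl never.

Lemma sems_vars1 g env a : sems g (a :: env) (vars_from 1 (length env)) = env.
Proof. exact (sems_vars_env g env [a]). Qed.

Lemma sem_EXL g env m p body Ls : length env = m -> nth p env 0 = Lcode Ls ->
  (truthy (sem g env (EXL m p body)) <-> exists J, In J Ls /\ truthy (sem g (jenc J :: env) body)).
Proof.
  intros Hm Hp. unfold EXL. rewrite sem_EXB by auto.
  rewrite (sem_LEN _ _ _ (map jenc Ls)) by (cbn [sem]; exact Hp).
  split.
  - intros [i [Hi H]]. rewrite sem_Sub in H. cbn [sems] in H. subst m. rewrite sems_vars1 in H.
    rewrite (sem_NTH _ _ _ _ (map jenc Ls)) in H by (cbn [sem nth]; exact Hp). cbn [sem nth] in H.
    rewrite length_map in Hi.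
    exists (nth i Ls (Jd 0 0 0 [] 0)). split; [apply nth_In; auto|].
    rewrite nth_indep with (d' := jenc (Jd 0 0 0 [] 0)) in H by (rewrite length_map; auto).
    rewrite map_nth in H. exact H.
  - intros [J [HJ H]]. apply In_nth_map in HJ as [i [Hi HE]]. exists i. split; auto.
    rewrite sem_Sub. cbn [sems]. subst m. rewrite sems_vars1.
    rewrite (sem_NTH _ _ _ _ (map jenc Ls)) by (cbn [sem nth]; exact Hp). cbn [sem nth].
    rewrite HE. exact H.
Qed.

Lemma sem_FORL g env m p body Ls : length env = m -> nth p env 0 = Lcode Ls ->
  (truthy (sem g env (FORL m p body)) <-> forall J, In J Ls -> truthy (sem g (jenc J :: env) body)).
Proof.
  intros Hm Hp. unfold FORL. rewrite sem_FORB by auto.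
  rewrite (sem_LEN _ _ _ (map jenc Ls)) by (cbn [sem]; exact Hp).
  split.
  - intros H J HJ. apply In_nth_map in HJ as [i [Hi HE]]. specialize (H i Hi).
    rewrite sem_Sub in H. cbn [sems] in H. subst m. rewrite sems_vars1 in H.
    rewrite (sem_NTH _ _ _ _ (map jenc Ls)) in H by (cbn [sem nth]; exact Hp). cbn [sem nth] in H.
    rewrite HE in H. exact H.
  - intros H i Hi. rewrite sem_Sub. cbn [sems]. subst m. rewrite sems_vars1.
    rewrite (sem_NTH _ _ _ _ (map jenc Ls)) by (cbn [sem nth]; exact Hp). cbn [sem nth].
    rewrite length_map in Hi.
    rewrite nth_indep with (d' := jenc (Jd 0 0 0 [] 0)) by (rewrite length_map; auto).
    rewrite map_nth. apply H. apply nth_In. auto.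
Qed.

Fixpoint ANDL (l : list exp) : exp := match l with [] => Cst 1 | e :: l => AND e (ANDL l) end.

Lemma sem_ANDL g env l : truthy (sem g env (ANDL l)) <-> Forall (fun e => truthy (sem g env e)) l.
Proof.
  induction l; cbn [ANDL].
  - split; [constructor|]. intros _. unfold truthy; cbn; lia.
  - rewrite sem_AND, IHl. split; [intros [H1 H2]; constructor; auto|intros H; inversion H; auto].
Qed.

Definition IYE (s : sys) j := IFZ (EQB j (Cst 1)) (IFZ (EQB j (Cst 2)) (Cst (iy3 s)) (Cst (iy2 s))) (Cst (iy1 s)).

Lemma sem_IYE g env s j : sem g env (IYE s j) = iy s (sem g env j).
Proof.
  unfold IYE, iy. rewrite !sem_IFZ, !sem_EQB01. cbn [sem].
  destruct (sem g env j =? 1); destruct (sem g env j =? 2); reflexivity.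
Qed.

Fixpoint memsg (s : sys) (gs : list code) (o : nat) : list exp :=
  match gs with
  | [] => []
  | g :: gs => MEM (JMK (Var 1) (Var 2) (Cst (ix s g)) (Var 4) (NTH (Cst o) (JA (Var 0)))) (Var 6)
               :: memsg s gs (S o)
  end.

(* env6 = [j; k; ci; al; y; L] *)
Definition CHK (s : sys) (c : code) : exp :=
  match c with
  | cZero => EQB (Var 4) (Cst 0)
  | cSucc => EQB (Var 4) (Suc (LHD (Var 3)))
  | cProj i => EQB (Var 4) (NTH (Cst i) (Var 3))
  | cOrac =>
      IFZ (Var 0)
        (EQB (Var 4) (Orc (LHD (Var 3))))
        (IFZ (EVEN (LHD (Var 3)))
           (IFZ (Var 1)
              (MEM (JMK (Cst 0) (Cst 0) (Cst (i0 s)) (LCONS (DIV2 (LHD (Var 3))) (Cst 0)) (Var 4)) (Var 5))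
              (MEM (JMK (Cst 1) (PRED (Var 1)) (Cst (iS s)) (LCONS (DIV2 (LHD (Var 3))) (Cst 0)) (Var 4)) (Var 5)))
           (MEM (JMK (Cst 0) (Cst 0) (IYE s (Var 0)) (LCONS (DIV2 (LHD (Var 3))) (Cst 0)) (Var 4)) (Var 5)))
  | cComp f gs =>
      EXL 6 5 (ANDL ([EQB (JJ (Var 0)) (Var 1); EQB (JK (Var 0)) (Var 2); EQB (JC (Var 0)) (Cst (ix s f));
                      EQB (JY (Var 0)) (Var 5); EQB (LEN (JA (Var 0))) (Cst (length (cl gs)))]
                     ++ memsg s (cl gs) 0))
  | cPrec f g =>
      IFZ (Var 3) (Cst 0)
        (IFZ (LHD (Var 3))
           (MEM (JMK (Var 0) (Var 1) (Cst (ix s f)) (LTL (Var 3)) (Var 4)) (Var 5))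
           (EXL 6 5 (ANDL [EQB (JJ (Var 0)) (Var 1); EQB (JK (Var 0)) (Var 2); EQB (JC (Var 0)) (Var 3);
                           EQB (JA (Var 0)) (LCONS (PRED (LHD (Var 4))) (LTL (Var 4)));
                           MEM (JMK (Var 1) (Var 2) (Cst (ix s g))
                                    (LCONS (PRED (LHD (Var 4))) (LCONS (JY (Var 0)) (LTL (Var 4)))) (Var 5)) (Var 6)])))
  | cMin f =>
      AND (MEM (JMK (Var 0) (Var 1) (Cst (ix s f)) (LCONS (Var 4) (Var 3)) (Cst 0)) (Var 5))
          (FORB 6 (Var 4)
             (EXL 7 6 (ANDL [EQB (JJ (Var 0)) (Var 2); EQB (JK (Var 0)) (Var 3); EQB (JC (Var 0)) (Cst (ix s f));
                             EQB (JA (Var 0)) (LCONS (Var 1) (Var 5)); NOT (EQB (JY (Var 0)) (Cst 0))])))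
  end.

Ltac fields H := let a := fresh in let b := fresh in let c := fresh in let d := fresh in let e := fresh in
  destruct (sem_fields _ _ _ _ _ _ _ _ H) as [a [b [c [d e]]]].

Lemma memsg_ok g s gs o j k ci a y Ls j' k' ci' bs y' :
  Forall (fun e => truthy (sem g [jenc (Jd j' k' ci' bs y'); j; k; ci; lenc a; y; Lcode Ls] e)) (memsg s gs o) <->
  forall t, t < length gs -> In (Jd j k (ix s (nth t gs cZero)) a (nth (o + t) bs 0)) Ls.
Proof.
  revert o. induction gs as [|gg gs IH]; intros o; cbn [memsg].
  - split; [intros _ t Ht; simpl in Ht; lia|constructor].
  - rewrite Forall_cons_iff, IH.
    assert (HJA : sem g [jenc (Jd j' k' ci' bs y'); j; k; ci; lenc a; y; Lcode Ls] (JA (Var 0)) = lenc bs)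
      by (apply (sem_fields g _ (Var 0) j' k' ci' bs y'); reflexivity).
    rewrite (sem_MEM _ _ _ _ Ls (Jd j k (ix s gg) a (nth o bs 0))).
    2: reflexivity.
    2: { rewrite (sem_JMK _ _ _ _ _ _ _ a) by reflexivity. cbn [sem nth].
         rewrite (sem_NTH _ _ _ _ bs) by exact HJA. reflexivity. }
    split.
    + intros [H1 H2] [|t] Ht; simpl.
      * rewrite Nat.add_0_r. exact H1.
      * replace (o + S t) with (S o + t) by lia. apply H2. simpl in Ht; lia.
    + intros H. split.
      * specialize (H 0 ltac:(simpl; lia)). simpl in H. rewrite Nat.add_0_r in H. exact H.
      * intros t Ht. specialize (H (S t) ltac:(simpl; lia)). simpl in H.
        replace (S o + t) with (o + S t) by lia. exact H.
Qed.

Lemma sem_EQB_t g env a b : truthy (sem g env (EQB a b)) <-> sem g env a = sem g env b.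
Proof. apply sem_EQB. Qed.

Lemma chk_ok s Y Ls j k ci a y c :
  truthy (sem (chi Y) [j; k; ci; lenc a; y; Lcode Ls] (CHK s c)) <-> localC s Y Ls j k ci a y c.
Proof.
  set (env := [j; k; ci; lenc a; y; Lcode Ls]).
  assert (HL : sem (chi Y) env (Var 5) = Lcode Ls) by reflexivity.
  assert (Hhd : sem (chi Y) env (LHD (Var 3)) = hd 0 a) by (rewrite sem_LHD; apply lhd_enc).
  destruct c as [ | | i | | f gs | f g | f ]; unfold CHK, localC.
  - rewrite sem_EQB. reflexivity.
  - rewrite sem_EQB. cbn [sem]. rewrite Hhd. reflexivity.
  - rewrite sem_EQB. rewrite (sem_NTH _ _ _ _ a) by reflexivity. reflexivity.
  - unfold truthy. rewrite sem_IFZ. change (sem (chi Y) env (Var 0)) with j.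
    destruct j as [|j'].
    + fold (truthy (sem (chi Y) env (EQB (Var 4) (Orc (LHD (Var 3)))))). rewrite sem_EQB. cbn [sem].
      rewrite Hhd. reflexivity.
    + simpl (S j' =? 0). rewrite sem_IFZ, sem_EVEN, Hhd.
      destruct (Nat.even (hd 0 a)) eqn:Ev.
      * fold (truthy (sem (chi Y) env (MEM (JMK (Cst 0) (Cst 0) (IYE s (Var 0)) (LCONS (DIV2 (LHD (Var 3))) (Cst 0)) (Var 4)) (Var 5)))).
        apply sem_MEM; auto. rewrite (sem_JMK _ _ _ _ _ _ _ [Nat.div2 (hd 0 a)]).
        -- rewrite sem_IYE. reflexivity.
        -- apply sem_LCONS_enc; [rewrite sem_DIV2, Hhd; reflexivity|reflexivity].
      * rewrite sem_IFZ. change (sem (chi Y) env (Var 1)) with k. destruct k as [|k'].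
        -- fold (truthy (sem (chi Y) env (MEM (JMK (Cst 0) (Cst 0) (Cst (i0 s)) (LCONS (DIV2 (LHD (Var 3))) (Cst 0)) (Var 4)) (Var 5)))).
           apply sem_MEM; auto. rewrite (sem_JMK _ _ _ _ _ _ _ [Nat.div2 (hd 0 a)]). reflexivity.
           apply sem_LCONS_enc; [rewrite sem_DIV2, Hhd; reflexivity|reflexivity].
        -- fold (truthy (sem (chi Y) env (MEM (JMK (Cst 1) (PRED (Var 1)) (Cst (iS s)) (LCONS (DIV2 (LHD (Var 3))) (Cst 0)) (Var 4)) (Var 5)))).
           apply sem_MEM; auto. rewrite (sem_JMK _ _ _ _ _ _ _ [Nat.div2 (hd 0 a)]).
           ++ rewrite sem_PRED. reflexivity.
           ++ apply sem_LCONS_enc; [rewrite sem_DIV2, Hhd; reflexivity|reflexivity].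
  - rewrite (sem_EXL _ _ 6 5 _ Ls) by reflexivity.
    split.
    + intros [[j' k' ci' bs y'] [HJ Hb]]. apply sem_ANDL in Hb.
      apply Forall_app in Hb as [Hb1 Hb2].
      unfold env in Hb2. pose proof (proj1 (memsg_ok (chi Y) s (cl gs) 0 j k ci a y Ls j' k' ci' bs y') Hb2) as Hb2'. clear Hb2. rename Hb2' into Hb2.
      assert (He : sem (chi Y) (jenc (Jd j' k' ci' bs y') :: env) (Var 0) = jenc (Jd j' k' ci' bs y')) by reflexivity.
      fields He. unfold env in *.
      inversion Hb1 as [|x1 l1 B1 Hb1']; subst. inversion Hb1' as [|x2 l2 B2 Hb2']; subst.
      inversion Hb2' as [|x3 l3 B3 Hb3']; subst. inversion Hb3' as [|x4 l4 B4 Hb4']; subst.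
      inversion Hb4' as [|x5 l5 B5 _]; subst.
      apply sem_EQB in B1, B2, B3, B4, B5. cbn [sem nth] in B1, B2, B3, B4, B5.
      rewrite (sem_LEN _ _ _ bs) in B5 by assumption.
      exists bs. split; [congruence|]. split.
      * replace j with j' by congruence. replace k with k' by congruence.
        replace (ix s f) with ci' by congruence. replace y with y' by congruence. exact HJ.
      * intros i Hi. apply Hb2 in Hi. exact Hi.
    + intros [bs [Hl [HJ Hg]]]. exists (Jd j k (ix s f) bs y). split; auto.
      apply sem_ANDL. apply Forall_app. split.
      * assert (He : sem (chi Y) (jenc (Jd j k (ix s f) bs y) :: env) (Var 0) = jenc (Jd j k (ix s f) bs y)) by reflexivity.
        fields He. unfold env in *.
        repeat constructor; apply sem_EQB; cbn [sem nth]; auto.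
        rewrite (sem_LEN _ _ _ bs) by assumption. auto.
      * unfold env. apply (memsg_ok (chi Y) s (cl gs) 0 j k ci a y Ls j k (ix s f) bs y). exact Hg.
  - unfold truthy. rewrite sem_IFZ. change (sem (chi Y) env (Var 3)) with (lenc a).
    destruct a as [|h a']; [simpl; lia|]. simpl (lenc (h :: a')) at 1.
    rewrite sem_IFZ, Hhd. simpl (hd 0 (h :: a')).
    assert (Htl : sem (chi Y) env (LTL (Var 3)) = lenc a') by (rewrite sem_LTL; apply ltl_enc).
    destruct h as [|n].
    + fold (truthy (sem (chi Y) env (MEM (JMK (Var 0) (Var 1) (Cst (ix s f)) (LTL (Var 3)) (Var 4)) (Var 5)))).
      apply sem_MEM; auto. apply sem_JMK. exact Htl.
    + fold (truthy (sem (chi Y) env (EXL 6 5 (ANDL [EQB (JJ (Var 0)) (Var 1); EQB (JK (Var 0)) (Var 2); EQB (JC (Var 0)) (Var 3);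
                           EQB (JA (Var 0)) (LCONS (PRED (LHD (Var 4))) (LTL (Var 4)));
                           MEM (JMK (Var 1) (Var 2) (Cst (ix s g))
                                    (LCONS (PRED (LHD (Var 4))) (LCONS (JY (Var 0)) (LTL (Var 4)))) (Var 5)) (Var 6)])))).
      rewrite (sem_EXL _ _ 6 5 _ Ls) by reflexivity.
      split.
      * intros [[j' k' ci' a'' z] [HJ Hb]]. apply sem_ANDL in Hb.
        assert (He : sem (chi Y) (jenc (Jd j' k' ci' a'' z) :: env) (Var 0) = jenc (Jd j' k' ci' a'' z)) by reflexivity.
        fields He. unfold env in *.
        assert (Hhd' : sem (chi Y) (jenc (Jd j' k' ci' a'' z) :: env) (LHD (Var 4)) = S n) by (rewrite sem_LHD; apply (lhd_enc (S n :: a'))).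
        assert (Htl' : sem (chi Y) (jenc (Jd j' k' ci' a'' z) :: env) (LTL (Var 4)) = lenc a') by (rewrite sem_LTL; apply (ltl_enc (S n :: a'))).
        unfold env in *.
        inversion Hb as [|x1 l1 B1 Hb1']; subst. inversion Hb1' as [|x2 l2 B2 Hb2']; subst.
        inversion Hb2' as [|x3 l3 B3 Hb3']; subst. inversion Hb3' as [|x4 l4 B4 Hb4']; subst.
        inversion Hb4' as [|x5 l5 B5 _]; subst.
        apply sem_EQB in B1, B2, B3, B4. cbn [sem nth] in B1, B2, B3.
        rewrite (sem_LCONS_enc _ _ _ _ n a') in B4 by (rewrite ?sem_PRED, ?Hhd'; auto).
        assert (a'' = n :: a') by (apply lenc_inj; congruence). subst a''.
        exists z. split.
        -- replace j with j' by congruence. replace k with k' by congruence. replace ci with ci' by congruence.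
           exact HJ.
        -- rewrite (sem_MEM _ _ _ _ Ls (Jd j k (ix s g) (n :: z :: a') y)) in B5; auto.
           rewrite (sem_JMK _ _ _ _ _ _ _ (n :: z :: a')). reflexivity.
           apply sem_LCONS_enc. rewrite sem_PRED, Hhd'. reflexivity.
           apply sem_LCONS_enc; auto.
      * intros [z [H1 H2]]. exists (Jd j k ci (n :: a') z). split; auto.
        assert (He : sem (chi Y) (jenc (Jd j k ci (n :: a') z) :: env) (Var 0) = jenc (Jd j k ci (n :: a') z)) by reflexivity.
        fields He. unfold env in *.
        assert (Hhd' : sem (chi Y) (jenc (Jd j k ci (n :: a') z) :: env) (LHD (Var 4)) = S n) by (rewrite sem_LHD; apply (lhd_enc (S n :: a'))).
        assert (Htl' : sem (chi Y) (jenc (Jd j k ci (n :: a') z) :: env) (LTL (Var 4)) = lenc a') by (rewrite sem_LTL; apply (ltl_enc (S n :: a'))).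
        unfold env in *.
        apply sem_ANDL. repeat constructor.
        -- apply sem_EQB; cbn [sem nth]; auto.
        -- apply sem_EQB; cbn [sem nth]; auto.
        -- apply sem_EQB; cbn [sem nth]; auto.
        -- apply sem_EQB. rewrite (sem_LCONS_enc _ _ _ _ n a'); auto. rewrite sem_PRED, Hhd'. reflexivity.
        -- rewrite (sem_MEM _ _ _ _ Ls (Jd j k (ix s g) (n :: z :: a') y)); auto.
           rewrite (sem_JMK _ _ _ _ _ _ _ (n :: z :: a')). reflexivity.
           apply sem_LCONS_enc. rewrite sem_PRED, Hhd'. reflexivity.
           apply sem_LCONS_enc; auto.
  - rewrite sem_AND.
    rewrite (sem_MEM _ _ _ _ Ls (Jd j k (ix s f) (y :: a) 0)); auto.
    2: { rewrite (sem_JMK _ _ _ _ _ _ _ (y :: a)). reflexivity. apply sem_LCONS_enc; reflexivity. }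
    rewrite (sem_FORB _ _ 6) by reflexivity. change (sem (chi Y) env (Var 4)) with y.
    apply and_iff_compat_l.
    match goal with |- (forall i, i < _ -> truthy (sem _ (i :: _) ?B)) <-> _ =>
      enough (Hm : forall m, truthy (sem (chi Y) (m :: env) B) <-> exists z, In (Jd j k (ix s f) (m :: a) (S z)) Ls)
        by (split; intros H m Hlt; apply Hm; apply H; auto) end.
    intros m.
    rewrite (sem_EXL _ _ 7 6 _ Ls) by reflexivity.
    split.
    + intros [[j' k' ci' a'' z] [HJ Hb]]. apply sem_ANDL in Hb.
      assert (He : sem (chi Y) (jenc (Jd j' k' ci' a'' z) :: m :: env) (Var 0) = jenc (Jd j' k' ci' a'' z)) by reflexivity.
      fields He. unfold env in *.
      inversion Hb as [|x1 l1 B1 Hb1']; subst. inversion Hb1' as [|x2 l2 B2 Hb2']; subst.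
      inversion Hb2' as [|x3 l3 B3 Hb3']; subst. inversion Hb3' as [|x4 l4 B4 Hb4']; subst.
      inversion Hb4' as [|x5 l5 B5 _]; subst.
      apply sem_EQB in B1, B2, B3, B4. apply sem_NOT in B5. rewrite sem_EQB01 in B5.
      cbn [sem nth] in B1, B2, B3, B5.
      rewrite (sem_LCONS_enc _ _ _ _ m a) in B4 by reflexivity.
      assert (a'' = m :: a) by (apply lenc_inj; congruence). subst a''.
      destruct z as [|z]. { exfalso. match goal with Hy : sem _ _ (JY (Var 0)) = 0 |- _ => rewrite Hy in B5 end.
        simpl in B5. discriminate. }
      exists z. replace j with j' by congruence. replace k with k' by congruence.
      replace (ix s f) with ci' by congruence. exact HJ.
    + intros [z HJ]. exists (Jd j k (ix s f) (m :: a) (S z)). split; auto.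
      assert (He : sem (chi Y) (jenc (Jd j k (ix s f) (m :: a) (S z)) :: m :: env) (Var 0) = jenc (Jd j k (ix s f) (m :: a) (S z))) by reflexivity.
      fields He. unfold env in *.
      apply sem_ANDL. repeat constructor.
      * apply sem_EQB; cbn [sem nth]; auto.
      * apply sem_EQB; cbn [sem nth]; auto.
      * apply sem_EQB; cbn [sem nth]; auto.
      * apply sem_EQB. rewrite (sem_LCONS_enc _ _ _ _ m a); auto.
      * apply sem_NOT. rewrite sem_EQB01. cbn [sem]. rewrite H3. reflexivity.
Qed.

Fixpoint disp (s : sys) (cs : list code) (o : nat) : exp :=
  match cs with
  | [] => Cst 0
  | c :: cs => OR (AND (EQB (Var 2) (Cst o)) (CHK s c)) (disp s cs (S o))
  end.

Lemma disp_ok s Y Ls j k ci a y cs o :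
  truthy (sem (chi Y) [j; k; ci; lenc a; y; Lcode Ls] (disp s cs o)) <->
  (o <= ci /\ match nth_error cs (ci - o) with Some c => localC s Y Ls j k ci a y c | None => False end).
Proof.
  revert o. induction cs as [|c cs IH]; intros o; cbn [disp].
  - unfold truthy; cbn [sem]. split; [lia|]. intros [_ H]. destruct (ci - o); simpl in H; contradiction.
  - rewrite sem_OR, sem_AND, sem_EQB, IH, chk_ok. cbn [sem nth]. split.
    + intros [[-> H]|[Hle H]].
      * split; auto. rewrite Nat.sub_diag. exact H.
      * split; [lia|]. replace (ci - o) with (S (ci - S o)) by lia. exact H.
    + intros [Hle H]. destruct (Nat.eq_dec ci o) as [->|Hne].
      * left. rewrite Nat.sub_diag in H. auto.
      * right. split; [lia|]. replace (ci - o) with (S (ci - S o)) in H by lia. exact H.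
Qed.

Definition LOCALt (s : sys) : exp :=
  Sub (disp s (Sb s) 0) (econs (JJ (Var 0)) (econs (JK (Var 0)) (econs (JC (Var 0)) (econs (JA (Var 0)) (econs (JY (Var 0)) (econs (Var 1) enil)))))).

Lemma local_ok s Y Ls J : truthy (sem (chi Y) [jenc J; Lcode Ls] (LOCALt s)) <-> localP s Y Ls J.
Proof.
  destruct J as [j k ci a y]. unfold LOCALt. rewrite sem_Sub. cbn [sems].
  assert (He : sem (chi Y) [jenc (Jd j k ci a y); Lcode Ls] (Var 0) = jenc (Jd j k ci a y)) by reflexivity.
  fields He. rewrite H, H0, H1, H2, H3. cbn [sem nth].
  rewrite disp_ok. unfold localP. rewrite Nat.sub_0_r. split; [intros [_ HH]; exact HH|intros HH; split; [lia|exact HH]].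
Qed.

Definition VALIDt (s : sys) : exp := FORL 1 0 (LOCALt s).

Lemma valid_ok s Y Ls : truthy (sem (chi Y) [Lcode Ls] (VALIDt s)) <-> valid s Y Ls.
Proof.
  unfold VALIDt. rewrite (sem_FORL _ _ 1 0 _ Ls) by reflexivity.
  unfold valid. split; intros H J HJ; specialize (H J HJ); apply local_ok; auto; apply local_ok; auto.
Qed.

Definition GOOD (s : sys) (x0 v I1 I2 : nat) : exp :=
  Sub (AND (Sub (VALIDt s) (econs (Var 1) enil))
           (IFZ (Var 0)
              (MEM (JMK (Cst 2) (Var 2) (Cst I1) (LCONS (Cst x0) (Cst 0)) (Cst v)) (Var 1))
              (MEM (JMK (Cst 3) (Var 2) (Cst I2) (LCONS (Cst x0) (Cst 0)) (Cst v)) (Var 1))))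
      (econs (FSTU (Var 0)) (econs (SNDU (Var 0)) (econs (Var 1) enil))).

Lemma good_ok s Y x0 v I1 I2 b Ls n :
  truthy (sem (chi Y) [mypair b (Lcode Ls); n] (GOOD s x0 v I1 I2)) <->
  valid s Y Ls /\ (b = 0 -> In (Jd 2 n I1 [x0] v) Ls) /\ (b <> 0 -> In (Jd 3 n I2 [x0] v) Ls).
Proof.
  unfold GOOD. rewrite sem_Sub. cbn [sems]. rewrite sem_FSTU, sem_SNDU. cbn [sem nth].
  rewrite fstu_pair, sndu_pair. rewrite sem_AND, sem_Sub. cbn [sems sem nth]. rewrite valid_ok.
  apply and_iff_compat_l. unfold truthy at 1. rewrite sem_IFZ. cbn [sem nth].
  destruct b as [|b].
  - fold (truthy (sem (chi Y) [0; Lcode Ls; n] (MEM (JMK (Cst 2) (Var 2) (Cst I1) (LCONS (Cst x0) (Cst 0)) (Cst v)) (Var 1)))).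
    rewrite (sem_MEM _ _ _ _ Ls (Jd 2 n I1 [x0] v)); auto.
    + split; [intros H; split; auto; intros HH; lia|intros [H _]; auto].
    + rewrite (sem_JMK _ _ _ _ _ _ _ [x0]). reflexivity. apply sem_LCONS_enc; reflexivity.
  - fold (truthy (sem (chi Y) [S b; Lcode Ls; n] (MEM (JMK (Cst 3) (Var 2) (Cst I2) (LCONS (Cst x0) (Cst 0)) (Cst v)) (Var 1)))).
    rewrite (sem_MEM _ _ _ _ Ls (Jd 3 n I2 [x0] v)); auto.
    + split; [intros H; split; auto; intros HH; lia|intros [_ H]; auto].
    + rewrite (sem_JMK _ _ _ _ _ _ _ [x0]). reflexivity. apply sem_LCONS_enc; reflexivity.
Qed.

Definition OUT : exp := IFZ (FSTU (Var 0)) (Cst 1) (Cst 0).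

Definition PROG s x0 v I1 I2 : code :=
  cComp (comp 1 OUT) (ccons (cMin (comp 2 (NOT (GOOD s x0 v I1 I2)))) cnil).



Lemma least_ex (P : nat -> Prop) : (forall n, P n \/ ~ P n) -> (exists n, P n) ->
  exists n, P n /\ forall m, m < n -> ~ P m.
Proof.
  intros Hd [n Hn]. revert Hn. induction n as [n IH] using (well_founded_induction lt_wf). intros Hn.
  assert (H : (exists m, m < n /\ P m) \/ (forall m, m < n -> ~ P m)).
  { clear IH Hn. induction n.
    - right. intros; lia.
    - destruct IHn as [[m [Hm Pm]]|H].
      + left. exists m. split; auto.
      + destruct (Hd n) as [Pn|Pn].
        * left. exists n. split; auto.
        * right. intros m Hm. destruct (Nat.eq_dec m n); [subst; auto|]. apply H. lia. }
  destruct H as [[m [Hm Pm]]|H].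
  - apply (IH m Hm Pm).
  - exists n. auto.
Qed.

Lemma core s Y fy fN (X : nat -> bool) x0 v I1 I2 c1 c2 :
  WF s Y fy fN ->
  nth_error (Sb s) I1 = Some c1 -> nth_error (Sb s) I2 = Some c2 ->
  (forall n, X n = true <-> ev (join (fy 2) (fN n)) c1 [x0] v) ->
  (forall n, X n = false <-> ev (join (fy 3) (fN n)) c2 [x0] v) ->
  turing_le X Y.
Proof.
  intros HW H1 H2 HX1 HX2. exists (enc (PROG s x0 v I1 I2)). intros n. apply Phi_enc.
  set (G := GOOD s x0 v I1 I2).
  assert (Hex : exists w, truthy (sem (chi Y) [w; n] G)).
  { destruct (X n) eqn:E.
    - apply HX1 in E.
      destruct (completeness s Y fy fN HW (rank 2 n) 2 n eq_refl c1 I1 [x0] v H1 E) as [Ls [HV HI]].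
      exists (mypair 0 (Lcode Ls)). apply good_ok. repeat split; auto. intros; lia.
    - apply HX2 in E.
      destruct (completeness s Y fy fN HW (rank 3 n) 3 n eq_refl c2 I2 [x0] v H2 E) as [Ls [HV HI]].
      exists (mypair 1 (Lcode Ls)). apply good_ok. repeat split; auto. intros; lia. }
  destruct (least_ex (fun w => truthy (sem (chi Y) [w; n] G))) as [w [Hw Hmin]]; auto.
  { intros w. unfold truthy. destruct (sem (chi Y) [w; n] G); [right; lia|left; lia]. }
  assert (Hdec : exists b Ls, w = mypair b (Lcode Ls)).
  { destruct (Lcode_surj (sndu w)) as [Ls HL]. exists (fstu w), Ls. rewrite HL. symmetry. apply pair_surj. }
  destruct Hdec as [b [Ls ->]].
  pose proof Hw as Hw0. apply good_ok in Hw as [HV [Hb0 Hb1]].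
  unfold PROG. eapply evComp.
  - constructor; [|constructor].
    constructor.
    + pose proof (comp_ok (chi Y) (NOT G) [mypair b (Lcode Ls); n]) as HC. cbn [length] in HC.
      rewrite sem_NOT01 in HC. unfold truthy in Hw0. fold G in HC.
      destruct (sem (chi Y) [mypair b (Lcode Ls); n] G =? 0) eqn:E; [apply Nat.eqb_eq in E; contradiction|].
      exact HC.
    + intros m Hm. exists 0. pose proof (comp_ok (chi Y) (NOT G) [m; n]) as HC. cbn [length] in HC.
      rewrite sem_NOT01 in HC. specialize (Hmin m Hm). unfold truthy in Hmin.
      destruct (sem (chi Y) [m; n] G =? 0) eqn:E; [exact HC|apply Nat.eqb_neq in E; contradiction].
  - pose proof (comp_ok (chi Y) OUT [mypair b (Lcode Ls)]) as HC. cbn [length] in HC.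
    replace (chi X n) with (sem (chi Y) [mypair b (Lcode Ls)] OUT); auto.
    unfold OUT. rewrite sem_IFZ, sem_FSTU. cbn [sem nth]. rewrite fstu_pair.
    unfold chi. destruct b as [|b].
    + specialize (Hb0 eq_refl).
      pose proof (soundness s Y fy fN Ls HW HV (rank 2 n) 2 n eq_refl c1 I1 [x0] v H1 Hb0) as HE.
      apply HX1 in HE. rewrite HE. reflexivity.
    + specialize (Hb1 ltac:(lia)).
      pose proof (soundness s Y fy fN Ls HW HV (rank 3 n) 3 n eq_refl c2 I2 [x0] v H2 Hb1) as HE.
      apply HX2 in HE. rewrite HE. reflexivity.
Qed.

Definition jf (g h : nat -> nat) (q : nat) : nat := if Nat.even q then g (Nat.div2 q) else h (Nat.div2 q).

Lemma join_tot g h : join (tot g) (tot h) = tot (jf g h).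
Proof. apply functional_extensionality. intros q. unfold join, tot, jf. destruct (Nat.even q); auto. Qed.

Lemma comp_tot_of X (f : nat -> nat) e : (forall i, sem (chi X) [i] e = f i) -> comp_tot X f.
Proof.
  intros H. exists (enc (comp 1 e)). intros i. apply Phi_enc. rewrite <- H. apply (comp_ok (chi X) e [i]).
Qed.

Lemma appK2_of g h k e : g 0 = enc (comp 1 e) -> (forall i, sem (jf g h) [i] e = k i) -> appK2 g h k.
Proof.
  intros H0 H i. rewrite H0, join_tot. apply Phi_enc. rewrite <- H. apply (comp_ok (jf g h) e [i]).
Qed.

Definition Nf (n : nat) : nat -> nat := fun i => if i =? 1 then n else 0.
Definition eS : exp := IFZ (EQB (Var 0) (Cst 1)) (Cst 0) (Suc (Orc (Cst 3))).
Definition Sf : nat -> nat := fun i => if i =? 0 then enc (comp 1 eS) else 0.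
Definition Af : nat -> nat := fun _ => 0.
Definition Bf : nat -> nat := fun _ => 1.
Definition bitE : exp := Orc (ADD (Suc (Orc (Cst 3))) (Suc (Orc (Cst 3)))).
Definition eD0 : exp := SUBT (Cst 1) bitE.
Definition eD1 : exp := bitE.
Definition Df (X : nat -> bool) (e : exp) : nat -> nat :=
  fun m => if m =? 0 then enc (comp 1 e) else chi X (m - 1).

Lemma Nf_comp X n : comp_tot X (Nf n).
Proof.
  apply (comp_tot_of X _ (IFZ (EQB (Var 0) (Cst 1)) (Cst 0) (Cst n))). intros i.
  rewrite sem_IFZ, sem_EQB01. cbn [sem nth]. unfold Nf. destruct (i =? 1); reflexivity.
Qed.

Lemma const0_comp X N : comp_tot X (fun i => if i =? 0 then N else 0).
Proof.
  apply (comp_tot_of X _ (IFZ (Var 0) (Cst N) (Cst 0))). intros i.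
  rewrite sem_IFZ. cbn [sem nth]. destruct i; reflexivity.
Qed.

Lemma Sf_comp X : comp_tot X Sf.
Proof. exact (const0_comp X (enc (comp 1 eS))). Qed.

Lemma Af_comp X : comp_tot X Af.
Proof. apply (comp_tot_of X _ (Cst 0)). reflexivity. Qed.
Lemma Bf_comp X : comp_tot X Bf.
Proof. apply (comp_tot_of X _ (Cst 1)). reflexivity. Qed.

Lemma constD_comp X N : comp_tot X (fun m => if m =? 0 then N else chi X (m - 1)).
Proof.
  apply (comp_tot_of X _ (IFZ (Var 0) (Cst N) (Orc (PRED (Var 0))))). intros i.
  rewrite sem_IFZ. cbn [sem nth]. destruct i; [reflexivity|].
  rewrite sem_PRED. cbn [sem nth]. simpl. rewrite Nat.sub_0_r. reflexivity.
Qed.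

Lemma Df_comp X e : comp_tot X (Df X e).
Proof. exact (constD_comp X (enc (comp 1 e))). Qed.

Lemma Sf0 : Sf 0 = enc (comp 1 eS).
Proof. unfold Sf. rewrite Nat.eqb_refl. reflexivity. Qed.
Lemma Df0 X e : Df X e 0 = enc (comp 1 e).
Proof. unfold Df. rewrite Nat.eqb_refl. reflexivity. Qed.

Lemma app_S n : appK2 Sf (Nf n) (Nf (S n)).
Proof.
  apply (appK2_of _ _ _ eS); [apply Sf0|]. intros i. unfold eS.
  rewrite sem_IFZ, sem_EQB01. cbn [sem nth]. unfold Nf. destruct (i =? 1); [|reflexivity].
  unfold jf. simpl. reflexivity.
Qed.



Lemma DfS X e m : Df X e (S m) = chi X m.
Proof. cbv beta iota delta [Df Nat.eqb]. f_equal. lia. Qed.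

Lemma sem_bit X e n i : sem (jf (Df X e) (Nf n)) [i] bitE = chi X n.
Proof.
  unfold bitE. cbn [sem]. rewrite sem_ADD. cbn [sem nth].
  assert (H3 : jf (Df X e) (Nf n) 3 = n) by reflexivity. rewrite H3.
  replace (S n + S n) with (2 * S n) by lia. unfold jf.
  rewrite Nat.even_mul. simpl (Nat.even 2). simpl orb. rewrite Nat.div2_double. apply DfS.
Qed.

Lemma app_D0 X n : appK2 (Df X eD0) (Nf n) (if X n then Af else Bf).
Proof.
  apply (appK2_of _ _ _ eD0); [apply Df0|]. intros i. unfold eD0.
  rewrite sem_SUBT, sem_bit. cbn [sem]. unfold chi, Af, Bf. destruct (X n); reflexivity.
Qed.

Lemma app_D1 X n : appK2 (Df X eD1) (Nf n) (if X n then Bf else Af).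
Proof.
  apply (appK2_of _ _ _ eD1); [apply Df0|]. intros i. unfold eD1.
  rewrite sem_bit. unfold chi, Af, Bf. destruct (X n); reflexivity.
Qed.

Definition cdiv : code := cMin cSucc.
Lemma cdiv_never o a y : ~ ev o cdiv a y.
Proof. intros H. inversion H; subst. inversion H1. Qed.

Lemma part_code Y f : comp_part Y f -> exists c, forall x m, f x = Some m <-> ev (tot (chi Y)) c [x] m.
Proof.
  intros [e He]. destruct (classic (exists c, enc c = e)) as [[c <-]|Hn].
  - exists c. intros x m. rewrite He. apply Phi_enc.
  - exists cdiv. intros x m. rewrite He. split.
    + intros [c [Ec _]]. exfalso. apply Hn. eauto.
    + intros H. exfalso. eapply cdiv_never; eauto.
Qed.

Lemma app_code f : exists c, forall h k, appB f h k -> forall x m, k x = Some m <-> ev (join f h) c [x] m.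
Proof.
  destruct (classic (exists c, f 0 = Some (enc c))) as [[c Hc]|Hn].
  - exists c. intros h k H x m. rewrite (H x m). split.
    + intros [e [He HP]]. rewrite Hc in He. injection He as <-. apply Phi_enc. exact HP.
    + intros HE. exists (enc c). split; auto. apply Phi_enc. exact HE.
  - exists cdiv. intros h k H x m. rewrite (H x m). split.
    + intros [e [He [c [Ec _]]]]. exfalso. apply Hn. exists c. congruence.
    + intros HE. exfalso. eapply cdiv_never; eauto.
Qed.

Fixpoint subs (c : code) : list code :=
  c :: match c with
       | cComp f gs => subs f ++ subss gs
       | cPrec f g => subs f ++ subs g
       | cMin f => subs f
       | _ => []
       end
with subss (gs : codes) : list code :=
  match gs with cnil => [] | ccons g gs => subs g ++ subss gs end.

Lemma subs_trans :
  (forall c d, In d (subs c) -> incl (subs d) (subs c)) /\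
  (forall gs d, In d (subss gs) -> incl (subs d) (subss gs)).
Proof.
  apply code_ind2; simpl; intros.
  all: try (destruct H as [<-|[]]; apply incl_refl).
  - destruct H1 as [<-|H1]; [apply incl_refl|]. apply in_app_or in H1 as [H1|H1].
    + intros x Hx; right; apply in_or_app; left; eapply H; eauto.
    + intros x Hx; right; apply in_or_app; right; eapply H0; eauto.
  - destruct H1 as [<-|H1]; [apply incl_refl|]. apply in_app_or in H1 as [H1|H1].
    + intros x Hx; right; apply in_or_app; left; eapply H; eauto.
    + intros x Hx; right; apply in_or_app; right; eapply H0; eauto.
  - destruct H0 as [<-|H0]; [apply incl_refl|]. intros x Hx; right; eapply H; eauto.
  - contradiction.
  - apply in_app_or in H1 as [H1|H1].
    + intros x Hx; apply in_or_app; left; eapply H; eauto.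
    + intros x Hx; apply in_or_app; right; eapply H0; eauto.
Qed.

Lemma subs_self c : In c (subs c).
Proof. destruct c; simpl; left; auto. Qed.

Lemma subss_in gs g : In g (cl gs) -> In g (subss gs).
Proof.
  induction gs; simpl; [tauto|]. intros [<-|H]; apply in_or_app; [left; apply subs_self|right; auto].
Qed.

Fixpoint find_idx (l : list code) (c : code) : nat :=
  match l with
  | [] => 0
  | d :: l => if Nat.eq_dec (enc d) (enc c) then 0 else S (find_idx l c)
  end.

Lemma find_idx_ok l c : In c l -> nth_error l (find_idx l c) = Some c.
Proof.
  induction l; simpl; [tauto|]. intros H. destruct (Nat.eq_dec (enc a) (enc c)) as [E|E].
  - apply enc_inj in E. subst. reflexivity.
  - destruct H as [<-|H]; [contradiction|]. auto.
Qed.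

Definition mksys (roots : list code) (c0 cs cy1 cy2 cy3 : code) : sys :=
  let Sb := concat (map subs roots) in
  mkSys Sb (find_idx Sb) (find_idx Sb c0) (find_idx Sb cs) (find_idx Sb cy1) (find_idx Sb cy2) (find_idx Sb cy3).

Lemma in_Sb roots c : In c roots -> In c (concat (map subs roots)).
Proof. intros H. apply in_concat. exists (subs c). split; [apply in_map; auto|apply subs_self]. Qed.

Lemma Sb_closed roots d : In d (concat (map subs roots)) -> incl (subs d) (concat (map subs roots)).
Proof.
  intros H. apply in_concat in H as [l [Hl Hd]]. apply in_map_iff in Hl as [r [<- Hr]].
  intros x Hx. apply in_concat. exists (subs r). split; [apply in_map; auto|].
  eapply (proj1 subs_trans); eauto.
Qed.

Lemma WF1_mksys roots c0 cs cy1 cy2 cy3 :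
  let s := mksys roots c0 cs cy1 cy2 cy3 in
  forall ci c, nth_error (Sb s) ci = Some c ->
     match c with
     | cComp f gs => nth_error (Sb s) (ix s f) = Some f /\
                     forall g, In g (cl gs) -> nth_error (Sb s) (ix s g) = Some g
     | cPrec f g => nth_error (Sb s) (ix s f) = Some f /\ nth_error (Sb s) (ix s g) = Some g
     | cMin f => nth_error (Sb s) (ix s f) = Some f
     | _ => True
     end.
Proof.
  intros s ci c Hc. simpl in *. apply nth_error_In in Hc. apply Sb_closed in Hc.
  destruct c; auto; simpl in Hc.
  - split.
    + apply find_idx_ok. apply Hc. right. apply in_or_app. left. apply subs_self.
    + intros g Hg. apply find_idx_ok. apply Hc. right. apply in_or_app. right.
      apply subss_in in Hg. apply (proj2 subs_trans) in Hg. apply Hg. apply subs_self.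
  - split; apply find_idx_ok; apply Hc; right; apply in_or_app; [left|right]; apply subs_self.
  - apply find_idx_ok; apply Hc; right; apply subs_self.
Qed.

Lemma glue (X Y : nat -> bool) (fS : nat -> option nat) (fN : nat -> nat -> option nat)
  (fD1 fD2 : nat -> option nat) (fR1 fR2 : nat -> nat -> option nat) (x0 v : nat) :
  comp_part Y fS -> comp_part Y (fN 0) -> comp_part Y fD1 -> comp_part Y fD2 ->
  (forall k, appB fS (fN k) (fN (S k))) ->
  (forall n, appB fD1 (fN n) (fR1 n)) -> (forall n, appB fD2 (fN n) (fR2 n)) ->
  (forall n, X n = true <-> fR1 n x0 = Some v) ->
  (forall n, X n = false <-> fR2 n x0 = Some v) ->
  turing_le X Y.
Proof.
  intros PS PN0 P1 P2 AS A1 A2 HX1 HX2.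
  destruct (part_code Y _ PS) as [cSY HSY].
  destruct (part_code Y _ PN0) as [c0 H0].
  destruct (part_code Y _ P1) as [c1Y H1Y].
  destruct (part_code Y _ P2) as [c2Y H2Y].
  destruct (app_code fS) as [cs Hs].
  destruct (app_code fD1) as [c1 H1].
  destruct (app_code fD2) as [c2 H2].
  set (roots := [c0; cs; cSY; c1Y; c2Y; c1; c2]).
  set (s := mksys roots c0 cs cSY c1Y c2Y).
  set (fy := fun j => if j =? 1 then fS else if j =? 2 then fD1 else fD2).
  assert (Hin : forall c, In c roots -> nth_error (Sb s) (find_idx (Sb s) c) = Some c).
  { intros c Hc. apply find_idx_ok. apply in_Sb. exact Hc. }
  assert (HW : WF s Y fy fN).
  { split; [apply WF1_mksys|]. split; [|split].
    - exists c0. split; [apply Hin; simpl; tauto|]. exact H0.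
    - exists cs. split; [apply Hin; simpl; tauto|]. intros k x y. apply Hs. apply AS.
    - intros j Hj. unfold iy, fy. simpl.
      destruct (j =? 1).
      + exists cSY. split; [apply Hin; simpl; tauto|]. exact HSY.
      + destruct (j =? 2).
        * exists c1Y. split; [apply Hin; simpl; tauto|]. exact H1Y.
        * exists c2Y. split; [apply Hin; simpl; tauto|]. exact H2Y. }
  apply (core s Y fy fN X x0 v (find_idx (Sb s) c1) (find_idx (Sb s) c2) c1 c2 HW).
  - apply Hin. simpl; tauto.
  - apply Hin. simpl; tauto.
  - intros n. rewrite HX1. simpl. apply H1. apply A1.
  - intros n. rewrite HX2. simpl. apply H2. apply A2.
Qed.

Definition kN X n : K2X X := exist _ (Nf n) (Nf_comp X n).
Definition kS X : K2X X := exist _ Sf (Sf_comp X).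
Definition kA X : K2X X := exist _ Af (Af_comp X).
Definition kB X : K2X X := exist _ Bf (Bf_comp X).
Definition kD0 X : K2X X := exist _ (Df X eD0) (Df_comp X eD0).
Definition kD1 X : K2X X := exist _ (Df X eD1) (Df_comp X eD1).

Lemma forward X Y : (exists F : K2X X -> BY Y, embedding_K2X_BY X Y F) -> turing_le X Y.
Proof.
  intros [F [Finj Fapp]].
  set (f := fun a => proj1_sig (F a)).
  assert (PB : forall a, comp_part Y (f a)) by (intros a; exact (proj2_sig (F a))).
  assert (AS : forall k, appB (f (kS X)) (f (kN X k)) (f (kN X (S k)))).
  { intros k. apply Fapp. apply app_S. }
  assert (A0 : forall n, appB (f (kD0 X)) (f (kN X n)) (f (if X n then kA X else kB X))).
  { intros n. apply Fapp. simpl. pose proof (app_D0 X n). destruct (X n); exact H. }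
  assert (A1 : forall n, appB (f (kD1 X)) (f (kN X n)) (f (if X n then kB X else kA X))).
  { intros n. apply Fapp. simpl. pose proof (app_D1 X n). destruct (X n); exact H. }
  assert (Hne : f (kA X) <> f (kB X)).
  { intros E. assert (F (kA X) = F (kB X)).
    { unfold f in E. destruct (F (kA X)) as [u pu], (F (kB X)) as [w pw]. simpl in E. subst.
      f_equal. apply proof_irrelevance. }
    apply Finj in H. apply (f_equal (fun a => proj1_sig a 0)) in H. simpl in H. unfold Af, Bf in H. discriminate. }
  assert (Hx : exists x0, f (kA X) x0 <> f (kB X) x0).
  { apply not_all_ex_not. intros H. apply Hne. apply functional_extensionality. exact H. }
  destruct Hx as [x0 Hx0].
  destruct (f (kA X) x0) as [v|] eqn:EA.
  - apply (glue X Y (f (kS X)) (fun n => f (kN X n)) (f (kD0 X)) (f (kD1 X))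
             (fun n => f (if X n then kA X else kB X)) (fun n => f (if X n then kB X else kA X)) x0 v);
      auto.
    + intros n. destruct (X n); split; auto; intros H; try discriminate; congruence.
    + intros n. destruct (X n); split; auto; intros H; try discriminate; congruence.
  - destruct (f (kB X) x0) as [v|] eqn:EB; [|congruence].
    apply (glue X Y (f (kS X)) (fun n => f (kN X n)) (f (kD1 X)) (f (kD0 X))
             (fun n => f (if X n then kB X else kA X)) (fun n => f (if X n then kA X else kB X)) x0 v);
      auto.
    + intros n. destruct (X n); split; auto; intros H; try discriminate; congruence.
    + intros n. destruct (X n); split; auto; intros H; try discriminate; congruence.
Qed.

Theorem theorem6p13 (X Y : nat -> bool) :
  (exists F : K2X X -> BY Y, embedding_K2X_BY X Y F) <-> turing_le X Y.
Proof. split; [apply forward|apply backward]. Qed.
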